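(* Let $\mathcal C$ be a convex arc with total curvature $\int_{\mathcal C}\kappa\,ds\le\pi$ whose radius of curvature satisfies $R_1\le\rho\le R_2$ at every point, for constants $0<R_1\le R_2$. Let $\mathcal L$ be a lattice in $\mathbb R^2$, let $L=\mathrm{Length}(\mathcal C)$, and let $\delta>0$ satisfy $$\delta<\frac{d_{\mathcal L}^2}{2\left(R_2+d_{\mathcal L}+\sqrt{(R_2+d_{\mathcal L})^2-d_{\mathcal L}^2}\right)}\quad\text{and}\quad \frac{A_{\mathcal L}}{2}-L\delta-\frac32\delta^2>0.$$ Then $$\#\{Q\in\mathcal L:\mathrm{dist}(\mathcal C,Q)<\delta\}<2+\frac{L}{\big(R_1(A_{\mathcal L}-2L\delta-3\delta^2)\big)^{1/3}}.$$
   Context: A lattice is a set $\mathcal L=\mathcal L(v_0,v_1,v_2)=\{v_0+mv_1+nv_2: m,n\in\mathbb Z\}$ where $v_0,v_1,v_2\in\mathbb R^2$ and $v_1,v_2$ are linearly independent; $A_{\mathcal L}=|\det(v_1,v_2)|$ and $d_{\mathcal L}=\min\{\|P-Q\|:P,Q\in\mathcal L,\ P\ne Q\}$. All curves are of class $C^2$ with nonvanishing first and second derivative vectors, oriented so that the curvature $\kappa$ is positive; a convex arc is such a non-closed curve lying on the boundary of a convex planar region. $\rho=1/\kappa$ is the radius of curvature, $s$ is arclength, and $\mathrm{dist}(\mathcal C,Q)$ is the Euclidean distance from $Q$ to the set $\mathcal C$. *)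

(* Defs.v *)
From Stdlib Require Import Reals Lra List.
From Coquelicot Require Import Coquelicot.
Open Scope R_scope.

Definition enorm2 (p : R * R) : R := sqrt (fst p ^ 2 + snd p ^ 2).
Definition edist2 (p q : R * R) : R := enorm2 (fst p - fst q, snd p - snd q).

Definition lattice_pt (v0 v1 v2 : R * R) (m n : Z) : R * R :=
  (fst v0 + IZR m * fst v1 + IZR n * fst v2,
   snd v0 + IZR m * snd v1 + IZR n * snd v2).

Definition in_lattice (v0 v1 v2 : R * R) (P : R * R) : Prop :=
  exists m n : Z, P = lattice_pt v0 v1 v2 m n.

Definition det2 (v1 v2 : R * R) : R := fst v1 * snd v2 - snd v1 * fst v2.

Definition lin_indep2 (v1 v2 : R * R) : Prop := det2 v1 v2 <> 0.

Definition lattice_area (v1 v2 : R * R) : R := Rabs (det2 v1 v2).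

Definition lattice_mindist (v0 v1 v2 : R * R) : R :=
  real (Glb_Rbar (fun r => exists P Q, in_lattice v0 v1 v2 P /\
                     in_lattice v0 v1 v2 Q /\ P <> Q /\ r = edist2 P Q)).

Definition is_C2_curve (gx gy dx dy ddx ddy : R -> R) : Prop :=
  forall t, is_derive gx t (dx t) /\ is_derive gy t (dy t) /\
            is_derive dx t (ddx t) /\ is_derive dy t (ddy t) /\
            continuous ddx t /\ continuous ddy t.

Definition speed (dx dy : R -> R) (t : R) : R := sqrt (dx t ^ 2 + dy t ^ 2).

Definition curvature (dx dy ddx ddy : R -> R) (t : R) : R :=
  (dx t * ddy t - dy t * ddx t) / (speed dx dy t ^ 3).

Definition convex_set (K : R * R -> Prop) : Prop :=
  forall p q l, K p -> K q -> 0 <= l <= 1 ->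
    K ((1 - l) * fst p + l * fst q, (1 - l) * snd p + l * snd q).

Definition on_boundary (K : R * R -> Prop) (p : R * R) : Prop :=
  forall e, 0 < e ->
    (exists q, edist2 p q < e /\ K q) /\ (exists q, edist2 p q < e /\ ~ K q).

(* A convex arc: a non-closed (simple) curve lying on the boundary of a
   convex planar region, with nonvanishing first and second derivative vectors and
   oriented so that the curvature is positive. *)
Definition convex_arc (a b : R) (gx gy dx dy ddx ddy : R -> R) : Prop :=
  a < b /\
  is_C2_curve gx gy dx dy ddx ddy /\
  (forall t, a <= t <= b -> (dx t, dy t) <> (0, 0)) /\
  (forall t, a <= t <= b -> (ddx t, ddy t) <> (0, 0)) /\
  (forall t, a <= t <= b -> 0 < curvature dx dy ddx ddy t) /\
  (forall s t, a <= s <= b -> a <= t <= b -> (gx s, gy s) = (gx t, gy t) -> s = t) /\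
  (exists K : R * R -> Prop, convex_set K /\
     forall t, a <= t <= b -> on_boundary K (gx t, gy t)).

Definition arc_length (a b : R) (dx dy : R -> R) : R := RInt (speed dx dy) a b.

Definition total_curvature (a b : R) (dx dy ddx ddy : R -> R) : R :=
  RInt (fun t => curvature dx dy ddx ddy t * speed dx dy t) a b.

Definition dist_curve (a b : R) (gx gy : R -> R) (Q : R * R) : R :=
  real (Glb_Rbar (fun r => exists t, a <= t <= b /\ r = edist2 (gx t, gy t) Q)).

(* Main.v *)
Require Import Defs.
From Stdlib Require Import Reals Lra List Psatz ZArith Classical.
From Coquelicot Require Import Coquelicot.
Open Scope R_scope.

Lemma isd_minus (f g : R -> R) (df dg x : R) : is_derive f x df -> is_derive g x dg ->
  is_derive (fun t => f t - g t) x (df - dg).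
Proof. intros H1 H2. exact (is_derive_minus f g x df dg H1 H2). Qed.
Lemma isd_plus (f g : R -> R) (df dg x : R) : is_derive f x df -> is_derive g x dg ->
  is_derive (fun t => f t + g t) x (df + dg).
Proof. intros H1 H2. exact (is_derive_plus f g x df dg H1 H2). Qed.
Lemma isd_mult (f g : R -> R) (df dg x : R) : is_derive f x df -> is_derive g x dg ->
  is_derive (fun t => f t * g t) x (df * g x + f x * dg).
Proof. intros H1 H2. 
  pose proof (is_derive_mult f g x df dg H1 H2 (fun n m => Rmult_comm n m)) as H.
  simpl in H. eapply is_derive_ext; [|exact H]. intros; reflexivity. Qed.
Lemma isd_const (c x : R) : is_derive (fun _ => c) x 0.
Proof. exact (is_derive_const (K:=R_AbsRing) (V:=R_NormedModule) c x). Qed.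
Lemma isd_id (x : R) : is_derive (fun t => t) x 1.
Proof. exact (is_derive_id (K:=R_AbsRing) x). Qed.
Lemma isd_scal (c : R) (f : R -> R) (df x : R) : is_derive f x df -> is_derive (fun t => c * f t) x (c * df).
Proof. intros H. replace (c * df) with (0 * f x + c * df) by ring.
  apply (isd_mult (fun _ => c) f 0 df x (isd_const c x) H). Qed.
Lemma isd_ext (f g : R -> R) (df x : R) : (forall t, f t = g t) -> is_derive f x df -> is_derive g x df.
Proof. intros He H. eapply is_derive_ext; eauto. Qed.
Lemma isd_eq (f : R -> R) (df df' x : R) : df = df' -> is_derive f x df -> is_derive f x df'.
Proof. intros ->; auto. Qed.
Lemma isd_comp (f g : R -> R) (df dg x : R) : is_derive f (g x) df -> is_derive g x dg ->
  is_derive (fun t => f (g t)) x (df * dg).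
Proof. intros H1 H2. pose proof (is_derive_comp f g x df dg H1 H2) as H.
  simpl in H. rewrite Rmult_comm. exact H. Qed.

Lemma cmp_deriv (f g df dg : R -> R) (u v : R) :
  u <= v ->
  (forall x, u <= x <= v -> is_derive f x (df x)) ->
  (forall x, u <= x <= v -> is_derive g x (dg x)) ->
  (forall x, u <= x <= v -> df x <= dg x) ->
  f v - f u <= g v - g u.
Proof.
  intros Huv Hf Hg Hle.
  destruct (MVT_gen (fun x => g x - f x) u v (fun x => dg x - df x)) as [c [Hc He]].
  - intros x Hx. rewrite Rmin_left in Hx by lra. rewrite Rmax_right in Hx by lra.
    apply isd_minus; [apply Hg|apply Hf]; lra.
  - intros x Hx. rewrite Rmin_left in Hx by lra. rewrite Rmax_right in Hx by lra.
    apply continuity_pt_filterlim.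
    apply (ex_derive_continuous (fun x => g x - f x)).
    eexists. apply isd_minus; [apply Hg|apply Hf]; lra.
  - rewrite Rmin_left in Hc by lra. rewrite Rmax_right in Hc by lra.
    assert (0 <= (dg c - df c) * (v - u)).
    { apply Rmult_le_pos. specialize (Hle c Hc). lra. lra. }
    lra.
Qed.

Lemma const_deriv0 (f : R -> R) (u v : R) :
  u <= v -> (forall x, u <= x <= v -> is_derive f x 0) -> f v = f u.
Proof.
  intros Huv H.
  pose proof (cmp_deriv f (fun _ => 0) (fun _ => 0) (fun _ => 0) u v Huv H
     (fun x _ => isd_const 0 x) (fun _ _ => Rle_refl 0)).
  pose proof (cmp_deriv (fun _ => 0) f (fun _ => 0) (fun _ => 0) u v Huv
     (fun x _ => isd_const 0 x) H (fun _ _ => Rle_refl 0)).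
  lra.
Qed.

Lemma isd_sq (f : R -> R) (df x : R) : is_derive f x df ->
  is_derive (fun t => f t ^ 2) x (2 * f x * df).
Proof. intros H. apply (isd_ext (fun t => f t * f t)). intros; simpl; ring.
  eapply isd_eq; [|apply isd_mult; eauto]. ring. Qed.

Lemma isd_lin2 (f g : R -> R) (A B C df dg x : R) :
  is_derive f x df -> is_derive g x dg ->
  is_derive (fun t => A * f t + B * g t + C) x (A * df + B * dg).
Proof. intros H1 H2. eapply isd_eq; [|apply isd_plus; [apply isd_plus; apply isd_scal; eauto|apply isd_const]].
  ring. Qed.

Lemma sin_le_x x : 0 <= x -> sin x <= x.
Proof.
  intros Hx.
  pose proof (cmp_deriv sin (fun t => t) cos (fun _ => 1) 0 x Hx
    (fun t _ => is_derive_sin t) (fun t _ => isd_id t) (fun t _ => proj2 (COS_bound t))).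
  rewrite sin_0 in H. lra.
Qed.

Lemma unit_bound (v1 v2 M : R) :
  (forall n1 n2, n1 ^ 2 + n2 ^ 2 = 1 -> v1 * n1 + v2 * n2 <= M) ->
  v1 ^ 2 + v2 ^ 2 <= M ^ 2.
Proof.
  intros H.
  destruct (Req_dec (v1 ^ 2 + v2 ^ 2) 0) as [E|E].
  - rewrite E. apply pow2_ge_0.
  - assert (Hp : 0 < v1 ^ 2 + v2 ^ 2) by (pose proof (pow2_ge_0 v1); pose proof (pow2_ge_0 v2); lra).
    set (r := sqrt (v1 ^ 2 + v2 ^ 2)).
    assert (Hr : 0 < r) by (apply sqrt_lt_R0; auto).
    assert (Hr2 : r ^ 2 = v1 ^ 2 + v2 ^ 2) by (unfold r; rewrite <- Rsqr_pow2; apply Rsqr_sqrt; lra).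
    specialize (H (v1 / r) (v2 / r)).
    assert (v1 * (v1 / r) + v2 * (v2 / r) = r).
    { field_simplify; [|lra]. rewrite <- Hr2. field. lra. }
    assert ((v1 / r) ^ 2 + (v2 / r) ^ 2 = 1).
    { field_simplify; [|lra]. rewrite <- Hr2. field. lra. }
    rewrite <- Hr2. apply pow_incr. lra.
Qed.

Definition pp (y : R) : R := (y + Rabs y) / 2.

Lemma pp_ge0 y : 0 <= pp y.
Proof. unfold pp. destruct (Rabs_pos y); unfold Rabs; destruct (Rcase_abs y); lra. Qed.
Lemma pp_pos y : 0 <= y -> pp y = y.
Proof. intros; unfold pp; rewrite Rabs_right by lra; lra. Qed.
Lemma pp_neg y : y <= 0 -> pp y = 0.
Proof. intros; unfold pp; rewrite Rabs_left1 by lra; lra. Qed.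
Lemma pp_ge y : y <= pp y.
Proof. unfold pp; unfold Rabs; destruct (Rcase_abs y); lra. Qed.

Lemma cont_of_deriv (f : R -> R) (df x : R) : is_derive f x df -> continuous f x.
Proof. intros H. apply (ex_derive_continuous f). exists df. exact H. Qed.

Lemma cnt_plus (f g : R -> R) (x : R) : continuous f x -> continuous g x ->
  continuous (fun t => f t + g t) x.
Proof. intros H1 H2. exact (continuous_plus f g x H1 H2). Qed.
Lemma cnt_mult (f g : R -> R) (x : R) : continuous f x -> continuous g x ->
  continuous (fun t => f t * g t) x.
Proof. intros H1 H2. exact (continuous_mult f g x H1 H2). Qed.
Lemma cnt_const (c x : R) : continuous (fun _ : R => c) x.
Proof. exact (continuous_const (U:=R_UniformSpace) (V:=R_UniformSpace) c x). Qed.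
Lemma cnt_ext (f g : R -> R) (x : R) : (forall t, f t = g t) -> continuous f x -> continuous g x.
Proof. intros H1 H2. exact (continuous_ext f g x H1 H2). Qed.

Lemma cont_pp (f : R -> R) x : continuous f x -> continuous (fun t => pp (f t)) x.
Proof.
  intros H. unfold pp.
  apply (cnt_ext (fun t => / 2 * (f t + Rabs (f t)))).
  { intros; field. }
  apply cnt_mult. apply cnt_const.
  apply cnt_plus. exact H.
  apply (continuous_Rabs_comp f). exact H.
Qed.

Lemma exR_cont (f : R -> R) u v :
  (forall z, Rmin u v <= z <= Rmax u v -> continuous f z) -> ex_RInt f u v.
Proof. intros H. exact (@ex_RInt_continuous R_CompleteNormedModule f u v H). Qed.

Lemma rint_deriv (F f : R -> R) u v :
  (forall x, is_derive F x (f x)) -> (forall x, continuous f x) ->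
  RInt f u v = F v - F u.
Proof.
  intros H1 H2. apply is_RInt_unique.
  exact (is_RInt_derive F f u v (fun x _ => H1 x) (fun x _ => H2 x)).
Qed.

Lemma rint_zero u v : RInt (fun _ => 0) u v = 0.
Proof. rewrite RInt_const. unfold scal; simpl; unfold mult; simpl; ring. Qed.

Section Trig.
Variables n1 n2 : R.
Definition tf (u : R) := n1 * cos u + n2 * sin u.
Definition tF (u : R) := n1 * sin u - n2 * cos u.

Lemma tF_deriv x : is_derive tF x (tf x).
Proof.
  unfold tF, tf.
  apply (isd_eq _ (n1 * cos x - n2 * (- sin x))). ring.
  apply isd_minus; apply isd_scal; [apply is_derive_sin | apply is_derive_cos].
Qed.

Lemma tf_deriv x : is_derive tf x (- tF x).
Proof.
  unfold tF, tf.
  apply (isd_eq _ (n1 * (- sin x) + n2 * cos x)). ring.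
  apply isd_plus; apply isd_scal; [apply is_derive_cos | apply is_derive_sin].
Qed.

Lemma tf_cont x : continuous tf x.
Proof. exact (cont_of_deriv tf _ x (tf_deriv x)). Qed.

Lemma tf_rot x0 u : tf u = tf x0 * cos (u - x0) - tF x0 * sin (u - x0).
Proof.
  unfold tf, tF. rewrite cos_minus, sin_minus.
  assert (H : sin x0 ^ 2 + cos x0 ^ 2 = 1) by (rewrite <- (sin2_cos2 x0); unfold Rsqr; ring).
  transitivity ((n1 * cos u + n2 * sin u) * (sin x0 ^ 2 + cos x0 ^ 2)).
  rewrite H; ring. ring.
Qed.

Lemma tF_rot x0 u : tF u = tF x0 * cos (u - x0) + tf x0 * sin (u - x0).
Proof.
  unfold tf, tF. rewrite cos_minus, sin_minus.
  assert (H : sin x0 ^ 2 + cos x0 ^ 2 = 1) by (rewrite <- (sin2_cos2 x0); unfold Rsqr; ring).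
  transitivity ((n1 * sin u - n2 * cos u) * (sin x0 ^ 2 + cos x0 ^ 2)).
  rewrite H; ring. ring.
Qed.

Hypothesis Hn : n1 ^ 2 + n2 ^ 2 = 1.

Lemma tfF_sq u : tf u ^ 2 + tF u ^ 2 = 1.
Proof.
  unfold tf, tF.
  assert (H : sin u ^ 2 + cos u ^ 2 = 1) by (rewrite <- (sin2_cos2 u); unfold Rsqr; ring).
  transitivity ((n1 ^ 2 + n2 ^ 2) * (sin u ^ 2 + cos u ^ 2)). ring.
  rewrite H, Hn. ring.
Qed.

Lemma trig_pos_int x :
  RInt (fun u => pp (tf u)) x (x + PI) <= 1 - tF x.
Proof.
  assert (Hc : forall y, continuous tf y) by exact tf_cont.
  assert (Hpi : x <= x + PI) by (pose proof PI_RGT_0; lra).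
  assert (HfPI : tf (x + PI) = - tf x).
  { unfold tf. rewrite neg_cos, neg_sin. ring. }
  assert (HFPI : tF (x + PI) = - tF x).
  { unfold tF. rewrite neg_cos, neg_sin. ring. }
  destruct (IVT_gen_consistent tf x (x + PI) 0 Hc) as [x0 [Hx0 Hf0]].
  { rewrite HfPI. unfold Rmin, Rmax; destruct (Rle_dec _ _); lra. }
  rewrite Rmin_left in Hx0 by lra. rewrite Rmax_right in Hx0 by lra.
  assert (HF0 : tF x0 = 1 \/ tF x0 = -1).
  { pose proof (tfF_sq x0). rewrite Hf0 in H. nra. }
  assert (Hex : forall u v, ex_RInt (fun u => pp (tf u)) u v).
  { intros. apply exR_cont. intros. apply cont_pp. apply Hc. }
  rewrite <- (RInt_Chasles _ x x0 (x + PI)) by apply Hex.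
  unfold plus; simpl.
  assert (Hsin1 : forall u, x <= u <= x0 -> sin (u - x0) <= 0).
  { intros u Hu. replace (u - x0) with (- (x0 - u)) by ring. rewrite sin_neg.
    assert (0 <= sin (x0 - u)) by (apply sin_ge_0; lra). lra. }
  assert (Hsin2 : forall u, x0 <= u <= x + PI -> 0 <= sin (u - x0)).
  { intros u Hu. apply sin_ge_0; lra. }
  destruct HF0 as [HF0|HF0].
  - rewrite (RInt_ext _ tf x x0).
    2:{ intros u Hu. rewrite Rmin_left in Hu by lra. rewrite Rmax_right in Hu by lra.
        apply pp_pos. rewrite (tf_rot x0), Hf0, HF0. specialize (Hsin1 u). lra. }
    rewrite (RInt_ext _ (fun _ => 0) x0 (x + PI)).
    2:{ intros u Hu. rewrite Rmin_left in Hu by lra. rewrite Rmax_right in Hu by lra.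
        apply pp_neg. rewrite (tf_rot x0), Hf0, HF0. specialize (Hsin2 u). lra. }
    rewrite rint_zero, (rint_deriv tF tf) by (auto using tF_deriv). lra.
  - rewrite (RInt_ext _ (fun _ => 0) x x0).
    2:{ intros u Hu. rewrite Rmin_left in Hu by lra. rewrite Rmax_right in Hu by lra.
        apply pp_neg. rewrite (tf_rot x0), Hf0, HF0. specialize (Hsin1 u). lra. }
    rewrite (RInt_ext _ tf x0 (x + PI)).
    2:{ intros u Hu. rewrite Rmin_left in Hu by lra. rewrite Rmax_right in Hu by lra.
        apply pp_pos. rewrite (tf_rot x0), Hf0, HF0. specialize (Hsin2 u). lra. }
    rewrite rint_zero, (rint_deriv tF tf) by (auto using tF_deriv). lra.
Qed.
End Trig.

Lemma sq_lt_of_sqrt_lt x y : 0 <= x -> sqrt x < y -> x < y ^ 2.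
Proof.
  intros Hx H. assert (0 <= sqrt x) by apply sqrt_pos.
  rewrite <- (sqrt_sqrt x) by auto. simpl. nra.
Qed.

Lemma sq_le_of_le_sqrt x y : 0 <= x -> 0 <= y -> y <= sqrt x -> y ^ 2 <= x.
Proof.
  intros Hx Hy H. rewrite <- (sqrt_sqrt x) by auto. simpl. nra.
Qed.

Lemma sq_lt_of_lt_sqrt x y : 0 <= x -> 0 <= y -> y < sqrt x -> y ^ 2 < x.
Proof.
  intros Hx Hy H. rewrite <- (sqrt_sqrt x) by auto. simpl. nra.
Qed.

Lemma collinear_contra (M1 M2 E1 E2 F1 F2 c1 c2 u1 u2 al be R d dl : R) :
  E1 - M1 = al * u1 -> E2 - M2 = al * u2 ->
  F1 - M1 = - be * u1 -> F2 - M2 = - be * u2 -> 0 < al -> 0 < be ->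
  R - dl < sqrt ((M1 - c1) ^ 2 + (M2 - c2) ^ 2) ->
  sqrt ((E1 - c1) ^ 2 + (E2 - c2) ^ 2) < R + dl ->
  sqrt ((F1 - c1) ^ 2 + (F2 - c2) ^ 2) < R + dl ->
  d <= sqrt ((E1 - M1) ^ 2 + (E2 - M2) ^ 2) ->
  d <= sqrt ((F1 - M1) ^ 2 + (F2 - M2) ^ 2) ->
  4 * R * dl + 2 * d * dl < d ^ 2 -> 0 <= d -> 0 < dl -> 0 <= R -> False.
Proof.
  intros HE1 HE2 HF1 HF2 Hal Hbe HM HE HF HdE HdF Hd Hd0 Hdl HR.
  set (v1 := M1 - c1) in *. set (v2 := M2 - c2) in *.
  assert (Hpos : forall x y, 0 <= x ^ 2 + y ^ 2) by (intros; pose proof (pow2_ge_0 x); pose proof (pow2_ge_0 y); lra).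
  apply sq_lt_of_sqrt_lt in HE; [|apply Hpos]. apply sq_lt_of_sqrt_lt in HF; [|apply Hpos].
  apply sq_le_of_le_sqrt in HdE; [|apply Hpos|auto]. apply sq_le_of_le_sqrt in HdF; [|apply Hpos|auto].
  assert (Key : d ^ 2 + (v1 ^ 2 + v2 ^ 2) < (R + dl) ^ 2).
  { destruct (Rle_dec 0 (v1 * u1 + v2 * u2)) as [Hs|Hs].
    - replace (E1 - c1) with (v1 + al * u1) in HE by (unfold v1; lra).
      replace (E2 - c2) with (v2 + al * u2) in HE by (unfold v2; lra).
      rewrite HE1, HE2 in HdE. nra.
    - replace (F1 - c1) with (v1 - be * u1) in HF by (unfold v1; lra).
      replace (F2 - c2) with (v2 - be * u2) in HF by (unfold v2; lra).
      rewrite HF1, HF2 in HdF. nra. }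
  destruct (Rle_dec dl R) as [Hr|Hr].
  - apply sq_lt_of_lt_sqrt in HM; [|apply Hpos|lra]. nra.
  - assert (d < 2 * dl) by nra. nra.
Qed.

Lemma cross_le (e1 e2 w1 w2 dl : R) : e1 ^ 2 + e2 ^ 2 <= dl ^ 2 -> 0 <= dl ->
  Rabs (e1 * w2 - e2 * w1) <= dl * sqrt (w1 ^ 2 + w2 ^ 2).
Proof.
  intros H Hd.
  assert (Hw : 0 <= w1 ^ 2 + w2 ^ 2) by (pose proof (pow2_ge_0 w1); pose proof (pow2_ge_0 w2); lra).
  assert (S : 0 <= sqrt (w1 ^ 2 + w2 ^ 2)) by apply sqrt_pos.
  assert (S2 : sqrt (w1 ^ 2 + w2 ^ 2) ^ 2 = w1 ^ 2 + w2 ^ 2) by (rewrite <- Rsqr_pow2; apply Rsqr_sqrt; auto).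
  apply Rsqr_incr_0_var. 2: apply Rmult_le_pos; auto.
  rewrite <- Rsqr_abs. rewrite !Rsqr_pow2. rewrite Rpow_mult_distr, S2.
  assert ((e1 * w2 - e2 * w1) ^ 2 <= (e1 ^ 2 + e2 ^ 2) * (w1 ^ 2 + w2 ^ 2)).
  { assert (0 <= (e1 * w1 + e2 * w2) ^ 2) by apply pow2_ge_0. nra. }
  assert ((e1 ^ 2 + e2 ^ 2) * (w1 ^ 2 + w2 ^ 2) <= dl ^ 2 * (w1 ^ 2 + w2 ^ 2)) by (apply Rmult_le_compat_r; auto).
  lra.
Qed.

Lemma weitz (u1 u2 w1 w2 : R) :
  3 * Rabs (u1 * w2 - u2 * w1) <= (u1 ^ 2 + u2 ^ 2) + (w1 ^ 2 + w2 ^ 2) + ((u1 - w1) ^ 2 + (u2 - w2) ^ 2).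
Proof.
  pose proof (pow2_ge_0 (w1 - (u1 - 3/2 * u2) / 2)). pose proof (pow2_ge_0 (w2 - (3/2 * u1 + u2) / 2)).
  pose proof (pow2_ge_0 (w1 - (u1 + 3/2 * u2) / 2)). pose proof (pow2_ge_0 (w2 - (- 3/2 * u1 + u2) / 2)).
  pose proof (pow2_ge_0 u1). pose proof (pow2_ge_0 u2).
  unfold Rabs; destruct (Rcase_abs _).
  - nra.
  - nra.
Qed.

Definition crs2 (x1 y1 x2 y2 x3 y3 : R) := (x2 - x1) * (y3 - y2) - (y2 - y1) * (x3 - x2).

Lemma perturb (p1 q1 p2 q2 p3 q3 e1 f1 e2 f2 e3 f3 dl : R) :
  e1 ^ 2 + f1 ^ 2 <= dl ^ 2 -> e2 ^ 2 + f2 ^ 2 <= dl ^ 2 -> e3 ^ 2 + f3 ^ 2 <= dl ^ 2 -> 0 <= dl ->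
  Rabs (crs2 (p1 + e1) (q1 + f1) (p2 + e2) (q2 + f2) (p3 + e3) (q3 + f3) - crs2 p1 q1 p2 q2 p3 q3)
  <= dl * (sqrt ((p2 - p3) ^ 2 + (q2 - q3) ^ 2) + sqrt ((p3 - p1) ^ 2 + (q3 - q1) ^ 2)
           + sqrt ((p1 - p2) ^ 2 + (q1 - q2) ^ 2)) + 3 * dl ^ 2.
Proof.
  intros H1 H2 H3 Hd.
  pose proof (cross_le e1 f1 (p2 - p3) (q2 - q3) dl H1 Hd) as C1.
  pose proof (cross_le e2 f2 (p3 - p1) (q3 - q1) dl H2 Hd) as C2.
  pose proof (cross_le e3 f3 (p1 - p2) (q1 - q2) dl H3 Hd) as C3.
  pose proof (weitz (e2 - e1) (f2 - f1) (e3 - e1) (f3 - f1)) as W.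
  assert (S : (e2 - e1) ^ 2 + (f2 - f1) ^ 2 + ((e3 - e1) ^ 2 + (f3 - f1) ^ 2) +
              ((e2 - e1 - (e3 - e1)) ^ 2 + (f2 - f1 - (f3 - f1)) ^ 2) <= 9 * dl ^ 2).
  { pose proof (pow2_ge_0 (e1 + e2 + e3)). pose proof (pow2_ge_0 (f1 + f2 + f3)). nra. }
  assert (E : crs2 (p1 + e1) (q1 + f1) (p2 + e2) (q2 + f2) (p3 + e3) (q3 + f3) - crs2 p1 q1 p2 q2 p3 q3
     = (e1 * (q2 - q3) - f1 * (p2 - p3)) + (e2 * (q3 - q1) - f2 * (p3 - p1)) + (e3 * (q1 - q2) - f3 * (p1 - p2))
       + ((e2 - e1) * (f3 - f1) - (f2 - f1) * (e3 - e1))).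
  { unfold crs2. ring. }
  rewrite E.
  eapply Rle_trans. apply Rabs_triang.
  eapply Rle_trans. apply Rplus_le_compat_r. eapply Rle_trans. apply Rabs_triang.
  apply Rplus_le_compat_r. apply Rabs_triang.
  lra.
Qed.

Lemma lattice_cross (v0 v1 v2 : R * R) (m1 n1 m2 n2 m3 n3 : Z) :
  let Q1 := lattice_pt v0 v1 v2 m1 n1 in
  let Q2 := lattice_pt v0 v1 v2 m2 n2 in
  let Q3 := lattice_pt v0 v1 v2 m3 n3 in
  crs2 (fst Q1) (snd Q1) (fst Q2) (snd Q2) (fst Q3) (snd Q3) =
  IZR ((m2 - m1) * (n3 - n2) - (n2 - n1) * (m3 - m2)) * det2 v1 v2.
Proof.
  simpl. unfold crs2, det2. rewrite minus_IZR, !mult_IZR, !minus_IZR. ring.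
Qed.

Lemma IZR_abs_ge1 (z : Z) : z <> 0%Z -> 1 <= Rabs (IZR z).
Proof.
  intros Hz. destruct (Z_lt_le_dec 0 z).
  - rewrite Rabs_right. apply IZR_le. lia. apply Rle_ge. apply IZR_le. lia.
  - rewrite Rabs_left. replace 1 with (- IZR (-1)) by (simpl; ring).
    apply Ropp_le_contravar. apply IZR_le. lia. apply IZR_lt. lia.
Qed.

Lemma nrm_sym p1 p2 q1 q2 : sqrt ((p1 - q1) ^ 2 + (p2 - q2) ^ 2) = sqrt ((q1 - p1) ^ 2 + (q2 - p2) ^ 2).
Proof. f_equal. ring. Qed.

Lemma tri3 p1 p2 q1 q2 r1 r2 :
  sqrt ((p1 - r1) ^ 2 + (p2 - r2) ^ 2) <=
  sqrt ((p1 - q1) ^ 2 + (p2 - q2) ^ 2) + sqrt ((q1 - r1) ^ 2 + (q2 - r2) ^ 2).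
Proof.
  set (x1 := p1 - q1). set (x2 := p2 - q2). set (y1 := q1 - r1). set (y2 := q2 - r2).
  replace (p1 - r1) with (x1 + y1) by (unfold x1, y1; ring).
  replace (p2 - r2) with (x2 + y2) by (unfold x2, y2; ring).
  assert (Hx : 0 <= x1 ^ 2 + x2 ^ 2) by (pose proof (pow2_ge_0 x1); pose proof (pow2_ge_0 x2); lra).
  assert (Hy : 0 <= y1 ^ 2 + y2 ^ 2) by (pose proof (pow2_ge_0 y1); pose proof (pow2_ge_0 y2); lra).
  assert (Hs : 0 <= (x1 + y1) ^ 2 + (x2 + y2) ^ 2) by (pose proof (pow2_ge_0 (x1+y1)); pose proof (pow2_ge_0 (x2+y2)); lra).
  set (X := sqrt (x1 ^ 2 + x2 ^ 2)). set (Yy := sqrt (y1 ^ 2 + y2 ^ 2)).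
  assert (HX : 0 <= X) by apply sqrt_pos. assert (HY : 0 <= Yy) by apply sqrt_pos.
  assert (HX2 : X * X = x1 ^ 2 + x2 ^ 2) by (apply sqrt_sqrt; auto).
  assert (HY2 : Yy * Yy = y1 ^ 2 + y2 ^ 2) by (apply sqrt_sqrt; auto).
  assert (CS : x1 * y1 + x2 * y2 <= X * Yy).
  { assert ((x1 * y1 + x2 * y2) ^ 2 <= (X * Yy) ^ 2).
    { replace ((X * Yy) ^ 2) with ((X * X) * (Yy * Yy)) by ring. rewrite HX2, HY2.
      pose proof (pow2_ge_0 (x1 * y2 - x2 * y1)). nra. }
    assert (0 <= X * Yy) by (apply Rmult_le_pos; auto). nra. }
  rewrite <- (sqrt_pow2 (X + Yy)) by lra.
  apply sqrt_le_1_alt. nra.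
Qed.

Lemma sqrt_le_of_sq x M : 0 <= M -> x <= M ^ 2 -> sqrt x <= M.
Proof. intros HM H. rewrite <- (sqrt_pow2 M HM). apply sqrt_le_1_alt. auto. Qed.

Lemma rem_len (l : list R) x : NoDup l -> In x l -> S (length (remove Req_EM_T x l)) = length l.
Proof.
  induction l as [|y l IH]; intros Hn Hi. destruct Hi.
  inversion Hn; subst. simpl. destruct (Req_EM_T x y) as [E|E].
  - subst. rewrite notin_remove by auto. reflexivity.
  - simpl. destruct Hi as [Hi|Hi]. congruence. rewrite IH; auto.
Qed.

Lemma rem_nodup (l : list R) x : NoDup l -> NoDup (remove Req_EM_T x l).
Proof.
  induction l as [|y l IH]; intros Hn. constructor.
  inversion Hn; subst. simpl. destruct (Req_EM_T x y).
  - auto.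
  - constructor. intros Hi. apply in_remove in Hi. tauto. auto.
Qed.

Lemma min_ex (l : list R) : l <> nil -> exists m, In m l /\ forall y, In y l -> m <= y.
Proof.
  induction l as [|x l IH]; intros Hl. congruence.
  destruct l as [|z l'].
  - exists x. split. left; auto. intros y [Hy|Hy]; [subst; lra|destruct Hy].
  - destruct IH as [m [Hm1 Hm2]]. discriminate.
    destruct (Rle_dec x m).
    + exists x. split. left; auto. intros y [Hy|Hy]. subst; lra. specialize (Hm2 y Hy). lra.
    + exists m. split. right; auto. intros y [Hy|Hy]. subst; lra. auto.
Qed.

Lemma count_aux (f : R -> R) (X lo0 hi : R) (n : nat) : 0 < X ->
  (forall x y, lo0 <= x -> x < y -> y <= hi -> f x < f y) ->
  forall (l : list R) lo, (length l <= n)%nat -> lo0 <= lo -> NoDup l -> (2 <= length l)%nat ->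
  (forall x, In x l -> lo <= x <= hi) ->
  (forall x y z, In x l -> In y l -> In z l -> x < y -> y < z -> 2 * X <= f z - f x) ->
  (INR (length l) - 2) * X < f hi - f lo.
Proof.
  intros HX Hf. induction n as [|n IH]; intros l lo Hn Hlo0 Hnd H2 Hin Htr.
  - lia.
  - destruct (min_ex l) as [m [Hm1 Hm2]]. { intros E; subst; simpl in H2; lia. }
    set (l1 := remove Req_EM_T m l).
    assert (L1 : S (length l1) = length l) by (apply rem_len; auto).
    assert (N1 : NoDup l1) by (apply rem_nodup; auto).
    destruct (min_ex l1) as [m' [Hm1' Hm2']]. { intros E. rewrite E in L1. simpl in L1. lia. }
    set (l2 := remove Req_EM_T m' l1).
    assert (L2 : S (length l2) = length l1) by (apply rem_len; auto).
    assert (N2 : NoDup l2) by (apply rem_nodup; auto).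
    assert (I1 : forall z, In z l1 -> In z l /\ z <> m) by (intros z Hz; apply in_remove in Hz; auto).
    assert (I2 : forall z, In z l2 -> In z l /\ z <> m /\ z <> m') .
    { intros z Hz. apply in_remove in Hz. destruct Hz as [Hz Hz']. apply I1 in Hz. tauto. }
    assert (Hmm' : m < m') by (destruct (I1 m' Hm1'); specialize (Hm2 m' H); lra).
    assert (Hz : forall z, In z l2 -> m' < z /\ 2 * X <= f z - f m).
    { intros z Hz. destruct (I2 z Hz) as [A [B C]].
      assert (m' < z) by (assert (In z l1) by (apply in_remove in Hz; tauto); specialize (Hm2' z H); lra).
      split; auto. apply (Htr m m' z); auto. destruct (I1 m' Hm1'); auto. }
    assert (Hlo : f lo <= f m).
    { destruct (Hin m Hm1). destruct (Rle_lt_or_eq_dec lo m H) as [E|E]. specialize (Hf _ _ Hlo0 E H0). lra. subst; lra. }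
    destruct (length l) as [|[|[|[|k]]]] eqn:EL; try lia.
    +
      assert (In m' l) by (destruct (I1 m' Hm1'); auto).
      destruct (Hin m' H) as [Ha1 Ha2]. destruct (Hin m Hm1) as [Hb1 Hb2].
      assert (f m' <= f hi) by (destruct (Rle_lt_or_eq_dec m' hi Ha2) as [E|E]; [specialize (Hf m' hi ltac:(lra) E (Rle_refl _)); lra|subst; lra]).
      specialize (Hf m m' ltac:(lra) Hmm' ltac:(lra)). simpl. lra.
    +
      destruct (min_ex l2) as [z [Hz1 _]]. { intros E. rewrite E in L2. simpl in L2. lia. }
      destruct (Hz z Hz1) as [_ Hz2].
      destruct (I2 z Hz1) as [Hzl _]. destruct (Hin z Hzl) as [Hzl' Hzh].
      assert (f z <= f hi) by (destruct (Rle_lt_or_eq_dec z hi Hzh) as [E|E]; [specialize (Hf z hi ltac:(lra) E (Rle_refl _)); lra|rewrite E; lra]).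
      replace (INR 3) with 3 by (simpl; ring). lra.
    +
      destruct (min_ex l2) as [z0 [Hz01 Hz02]]. { intros E. rewrite E in L2. simpl in L2. lia. }
      assert (Z0l : lo <= z0) by (destruct (I2 z0 Hz01) as [A _]; destruct (Hin z0 A); lra).
      assert (IH' := IH l2 z0 ltac:(lia) ltac:(lra) N2 ltac:(lia)).
      assert (Hin2 : forall x, In x l2 -> z0 <= x <= hi).
      { intros x Hx. split. auto. destruct (I2 x Hx) as [A _]. apply Hin; auto. }
      assert (Htr2 : forall x y z, In x l2 -> In y l2 -> In z l2 -> x < y -> y < z -> 2 * X <= f z - f x).
      { intros x y z Hx Hy Hz' ? ?. apply (Htr x y z); try lra; apply I2; auto. }
      specialize (IH' Hin2 Htr2).
      destruct (Hz z0 Hz01) as [_ Hz0].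
      assert (length l2 = S (S k)) by lia. rewrite H in IH'.
      replace (INR (S (S (S (S k))))) with (INR (S (S k)) + 2) by (rewrite !S_INR; ring).
      lra.
Qed.

Lemma count_main (f : R -> R) (X lo hi : R) (l : list R) : 0 < X -> lo <= hi ->
  (forall x y, lo <= x -> x < y -> y <= hi -> f x < f y) -> NoDup l ->
  (forall x, In x l -> lo <= x <= hi) ->
  (forall x y z, In x l -> In y l -> In z l -> x < y -> y < z -> 2 * X <= f z - f x) ->
  INR (length l) < 2 + (f hi - f lo) / X.
Proof.
  intros HX Hlh Hf Hnd Hin Htr.
  assert (0 <= (f hi - f lo) / X).
  { apply Rmult_le_pos; [|left; apply Rinv_0_lt_compat; auto].
    destruct (Rle_lt_or_eq_dec lo hi Hlh) as [E|E]. specialize (Hf _ _ (Rle_refl _) E (Rle_refl _)). lra. subst; lra. }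
  destruct (Compare_dec.le_lt_dec 2 (length l)) as [H2|H2].
  - pose proof (count_aux f X lo hi (length l) HX Hf l lo (le_n _) (Rle_refl _) Hnd H2 Hin Htr).
    apply (Rmult_lt_compat_r (/ X)) in H0; [|apply Rinv_0_lt_compat; auto].
    rewrite Rmult_assoc, Rinv_r in H0 by lra. unfold Rdiv. lra.
  - assert (INR (length l) <= 1) by (replace 1 with (INR 1) by reflexivity; apply le_INR; lia).
    lra.
Qed.

Lemma loc_interval (P : R -> Prop) (lo hi t : R) :
  lo < t < hi -> (forall y, lo < y < hi -> P y) -> locally t P.
Proof.
  intros Ht H.
  assert (He : 0 < Rmin (t - lo) (hi - t)) by (apply Rmin_glb_lt; lra).
  exists (mkposreal _ He). intros y Hy.
  unfold ball in Hy; simpl in Hy; unfold AbsRing_ball, abs, minus, plus, opp in Hy; simpl in Hy.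
  apply H.
  pose proof (Rmin_l (t - lo) (hi - t)). pose proof (Rmin_r (t - lo) (hi - t)).
  unfold Rabs in Hy; destruct (Rcase_abs _); lra.
Qed.

Lemma cnt_div (f g : R -> R) (x : R) : continuous f x -> continuous g x -> g x <> 0 ->
  continuous (fun t => f t / g t) x.
Proof.
  intros H1 H2 H3. apply continuity_pt_filterlim.
  apply continuity_pt_filterlim in H1. apply continuity_pt_filterlim in H2.
  exact (continuity_pt_div f g x H1 H2 H3).
Qed.

Lemma cnt_minus (f g : R -> R) (x : R) : continuous f x -> continuous g x ->
  continuous (fun t => f t - g t) x.
Proof. intros H1 H2. exact (continuous_minus f g x H1 H2). Qed.

Section Curve.
Variables (a b a0 b0 : R) (gx gy dx dy ddx ddy : R -> R).
Hypothesis Ha0 : a0 < a.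
Hypothesis Hab : a < b.
Hypothesis Hb0 : b < b0.
Hypothesis HC2 : is_C2_curve gx gy dx dy ddx ddy.
Hypothesis Hnz : forall t, a0 < t < b0 -> 0 < dx t ^ 2 + dy t ^ 2.

Definition qq t := dx t ^ 2 + dy t ^ 2.
Definition sp t := speed dx dy t.
Definition T1 t := dx t / sp t.
Definition T2 t := dy t / sp t.
Definition kk t := (dx t * ddy t - dy t * ddx t) / qq t.
Definition ph t := RInt kk a t.
Definition th0 := if Rle_dec 0 (T2 a) then acos (T1 a) else - acos (T1 a).
Definition th t := th0 + ph t.
Definition sg t := RInt sp a t.

Lemma sp_pos t : a0 < t < b0 -> 0 < sp t.
Proof. intros. unfold sp, speed. apply sqrt_lt_R0. apply Hnz; auto. Qed.

Lemma sp_sq t : sp t ^ 2 = qq t.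
Proof. unfold sp, speed, qq. rewrite <- Rsqr_pow2. apply Rsqr_sqrt. nra. Qed.

Lemma qq_deriv t : is_derive qq t (2 * (dx t * ddx t + dy t * ddy t)).
Proof.
  destruct (HC2 t) as [_ [_ [H1 [H2 _]]]].
  unfold qq. apply (isd_eq _ (ddx t * dx t + dx t * ddx t + (ddy t * dy t + dy t * ddy t))). ring.
  apply isd_plus.
  - apply (isd_ext (fun t => dx t * dx t)). intros; simpl; ring. apply isd_mult; auto.
  - apply (isd_ext (fun t => dy t * dy t)). intros; simpl; ring. apply isd_mult; auto.
Qed.

Lemma sp_deriv t : a0 < t < b0 -> is_derive sp t ((dx t * ddx t + dy t * ddy t) / sp t).
Proof.
  intros Ht. pose proof (sp_pos t Ht).
  unfold sp, speed.
  pose proof (is_derive_sqrt qq t _ (qq_deriv t) (Hnz t Ht)) as H'.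
  eapply isd_eq; [|exact H'].
  unfold qq. field. apply Rgt_not_eq. exact H.
Qed.

Lemma cont_dx t : continuous dx t.
Proof. destruct (HC2 t) as [_ [_ [H1 _]]]. exact (cont_of_deriv _ _ _ H1). Qed.
Lemma cont_dy t : continuous dy t.
Proof. destruct (HC2 t) as [_ [_ [_ [H1 _]]]]. exact (cont_of_deriv _ _ _ H1). Qed.
Lemma cont_ddx t : continuous ddx t.
Proof. destruct (HC2 t) as [_ [_ [_ [_ [H _]]]]]. exact H. Qed.
Lemma cont_ddy t : continuous ddy t.
Proof. destruct (HC2 t) as [_ [_ [_ [_ [_ H]]]]]. exact H. Qed.
Lemma cont_qq t : continuous qq t.
Proof. exact (cont_of_deriv _ _ _ (qq_deriv t)). Qed.
Lemma cont_sp t : a0 < t < b0 -> continuous sp t.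
Proof. intros Ht. exact (cont_of_deriv _ _ _ (sp_deriv t Ht)). Qed.

Lemma cont_kk t : a0 < t < b0 -> continuous kk t.
Proof.
  intros Ht. unfold kk. apply cnt_div.
  apply cnt_minus; apply cnt_mult; auto using cont_dx, cont_dy, cont_ddx, cont_ddy.
  apply cont_qq. unfold qq. apply Rgt_not_eq. apply Hnz; auto.
Qed.

Lemma ex_kk u v : a0 < u < b0 -> a0 < v < b0 -> ex_RInt kk u v.
Proof.
  intros Hu Hv. apply exR_cont. intros z Hz. apply cont_kk.
  unfold Rmin, Rmax in Hz; destruct (Rle_dec u v); lra.
Qed.

Lemma ex_sp u v : a0 < u < b0 -> a0 < v < b0 -> ex_RInt sp u v.
Proof.
  intros Hu Hv. apply exR_cont. intros z Hz. apply cont_sp.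
  unfold Rmin, Rmax in Hz; destruct (Rle_dec u v); lra.
Qed.

Lemma ph_deriv t : a0 < t < b0 -> is_derive ph t (kk t).
Proof.
  intros Ht. unfold ph. apply (is_derive_RInt kk (fun y => RInt kk a y) a t).
  - apply (loc_interval _ a0 b0 t Ht). intros y Hy.
    apply (RInt_correct kk a y). apply ex_kk; lra.
  - apply cont_kk; auto.
Qed.

Lemma th_deriv t : a0 < t < b0 -> is_derive th t (kk t).
Proof.
  intros Ht. unfold th. apply (isd_eq _ (0 + kk t)). ring.
  apply isd_plus. apply isd_const. apply ph_deriv; auto.
Qed.

Lemma sg_deriv t : a0 < t < b0 -> is_derive sg t (sp t).
Proof.
  intros Ht. unfold sg. apply (is_derive_RInt sp (fun y => RInt sp a y) a t).
  - apply (loc_interval _ a0 b0 t Ht). intros y Hy.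
    apply (RInt_correct sp a y). apply ex_sp; lra.
  - apply cont_sp; auto.
Qed.

Lemma T1_deriv t : a0 < t < b0 -> is_derive T1 t (- kk t * T2 t).
Proof.
  intros Ht. pose proof (sp_pos t Ht). pose proof (sp_sq t).
  destruct (HC2 t) as [_ [_ [H1 [H2 _]]]].
  unfold T1. eapply isd_eq; [|apply (is_derive_div dx sp t _ _ H1 (sp_deriv t Ht)); lra].
  unfold kk, T2. rewrite <- H0. field_simplify; [|lra|lra].
  rewrite H0; unfold qq; f_equal; ring.
Qed.

Lemma T2_deriv t : a0 < t < b0 -> is_derive T2 t (kk t * T1 t).
Proof.
  intros Ht. pose proof (sp_pos t Ht). pose proof (sp_sq t).
  destruct (HC2 t) as [_ [_ [H1 [H2 _]]]].
  unfold T2. eapply isd_eq; [|apply (is_derive_div dy sp t _ _ H2 (sp_deriv t Ht)); lra].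
  unfold kk, T1. rewrite <- H0. field_simplify; [|lra|lra].
  rewrite H0; unfold qq; f_equal; ring.
Qed.

Lemma T_unit t : a0 < t < b0 -> T1 t ^ 2 + T2 t ^ 2 = 1.
Proof.
  intros Ht. pose proof (sp_pos t Ht). pose proof (sp_sq t).
  unfold T1, T2. unfold qq in H0.
  replace ((dx t / sp t) ^ 2 + (dy t / sp t) ^ 2) with ((dx t ^ 2 + dy t ^ 2) / sp t ^ 2) by (field; lra).
  rewrite <- H0. field. lra.
Qed.

Lemma th_a : th a = th0.
Proof. unfold th, ph. rewrite RInt_point. unfold zero; simpl. ring. Qed.

Lemma th0_cos : cos th0 = T1 a /\ sin th0 = T2 a.
Proof.
  assert (Ha : a0 < a < b0) by lra.
  pose proof (T_unit a Ha) as HU.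
  assert (HB : -1 <= T1 a <= 1) by nra.
  assert (HS : sqrt (1 - (T1 a)²) = Rabs (T2 a)).
  { replace (1 - (T1 a)²) with ((T2 a)²) by (unfold Rsqr; nra). apply sqrt_Rsqr_abs. }
  unfold th0. destruct (Rle_dec 0 (T2 a)).
  - rewrite cos_acos by lra. rewrite sin_acos by lra. rewrite HS, Rabs_right by lra. auto.
  - rewrite cos_neg, sin_neg. rewrite cos_acos by lra. rewrite sin_acos by lra.
    rewrite HS, Rabs_left by lra. split; [auto|ring].
Qed.

Lemma T_rep t : a0 < t < b0 -> T1 t = cos (th t) /\ T2 t = sin (th t).
Proof.
  intros Ht.
  set (h := fun s => (T1 s - cos (th s)) ^ 2 + (T2 s - sin (th s)) ^ 2).
  assert (Hd : forall s, a0 < s < b0 -> is_derive h s 0).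
  { intros s Hs. unfold h.
    assert (HT : is_derive (fun s => cos (th s)) s (- sin (th s) * kk s)).
    { apply isd_comp. apply is_derive_cos. apply th_deriv; auto. }
    assert (HT' : is_derive (fun s => sin (th s)) s (cos (th s) * kk s)).
    { apply isd_comp. apply is_derive_sin. apply th_deriv; auto. }
    pose proof (isd_minus _ _ _ _ s (T1_deriv s Hs) HT) as D1.
    pose proof (isd_minus _ _ _ _ s (T2_deriv s Hs) HT') as D2.
    pose proof (isd_mult _ _ _ _ s D1 D1) as E1.
    pose proof (isd_mult _ _ _ _ s D2 D2) as E2.
    pose proof (isd_plus _ _ _ _ s E1 E2) as E.
    eapply isd_ext; [|eapply isd_eq; [|exact E]].
    intros; simpl; ring. simpl; ring. }
  assert (H0 : h a = 0).
  { unfold h. rewrite th_a. destruct th0_cos as [-> ->]. ring. }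
  assert (Hht : h t = 0).
  { destruct (Rle_dec a t).
    - rewrite (const_deriv0 h a t) by (auto; intros; apply Hd; lra). auto.
    - rewrite <- (const_deriv0 h t a) by (try lra; intros; apply Hd; lra). auto. }
  unfold h in Hht.
  pose proof (pow2_ge_0 (T1 t - cos (th t))). pose proof (pow2_ge_0 (T2 t - sin (th t))).
  assert (A1 : (T1 t - cos (th t))² = 0) by (rewrite Rsqr_pow2; lra).
  assert (A2 : (T2 t - sin (th t))² = 0) by (rewrite Rsqr_pow2; lra).
  apply Rsqr_0_uniq in A1. apply Rsqr_0_uniq in A2. split; lra.
Qed.

Lemma dx_rep t : a0 < t < b0 -> dx t = sp t * cos (th t).
Proof. intros Ht. destruct (T_rep t Ht) as [H _]. rewrite <- H. unfold T1.
  field. pose proof (sp_pos t Ht). lra. Qed.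
Lemma dy_rep t : a0 < t < b0 -> dy t = sp t * sin (th t).
Proof. intros Ht. destruct (T_rep t Ht) as [_ H]. rewrite <- H. unfold T2.
  field. pose proof (sp_pos t Ht). lra. Qed.

Lemma gx_deriv t : is_derive gx t (dx t).
Proof. destruct (HC2 t) as [H _]. exact H. Qed.
Lemma gy_deriv t : is_derive gy t (dy t).
Proof. destruct (HC2 t) as [_ [H _]]. exact H. Qed.


Variables R1 R2 : R.
Hypothesis HR1 : 0 < R1.
Hypothesis Hkpos : forall t, a <= t <= b -> 0 < curvature dx dy ddx ddy t.
Hypothesis Hrho : forall t, a <= t <= b -> R1 <= / curvature dx dy ddx ddy t <= R2.
Hypothesis Htot : RInt kk a b <= PI.

Lemma inI t : a <= t <= b -> a0 < t < b0.
Proof. lra. Qed.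

Lemma kk_curv t : a0 < t < b0 -> kk t = curvature dx dy ddx ddy t * sp t.
Proof.
  intros Ht. pose proof (sp_pos t Ht). pose proof (sp_sq t).
  unfold kk, curvature. fold (sp t). rewrite <- H0. field. lra.
Qed.

Lemma kk_pos t : a <= t <= b -> 0 < kk t.
Proof. intros Ht. rewrite kk_curv by lra. apply Rmult_lt_0_compat. auto. apply sp_pos; lra. Qed.

Lemma kk_R1 t : a <= t <= b -> R1 * kk t <= sp t.
Proof.
  intros Ht. rewrite kk_curv by lra. pose proof (Hkpos t Ht). pose proof (Hrho t Ht).
  pose proof (sp_pos t (inI t Ht)).
  set (c := curvature dx dy ddx ddy t) in *.
  assert (R1 * c <= 1).
  { destruct H0. apply (Rmult_le_compat_r c) in H0; [|lra]. rewrite Rinv_l in H0 by lra. lra. }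
  nra.
Qed.

Lemma sp_R2 t : a <= t <= b -> sp t <= R2 * kk t.
Proof.
  intros Ht. rewrite kk_curv by lra. pose proof (Hkpos t Ht). pose proof (Hrho t Ht).
  pose proof (sp_pos t (inI t Ht)).
  set (c := curvature dx dy ddx ddy t) in *.
  assert (1 <= R2 * c).
  { destruct H0. apply (Rmult_le_compat_r c) in H2; [|lra]. rewrite Rinv_l in H2 by lra. lra. }
  nra.
Qed.

Lemma th_mono u v : a <= u -> u <= v -> v <= b -> 0 <= th v - th u.
Proof.
  intros H1 H2 H3.
  pose proof (cmp_deriv (fun _ => 0) th (fun _ => 0) kk u v H2
    (fun x _ => isd_const 0 x) (fun x Hx => th_deriv x ltac:(lra))
    (fun x Hx => Rlt_le _ _ (kk_pos x ltac:(lra)))). lra.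
Qed.

Lemma th_ab : th b - th a <= PI.
Proof.
  unfold th, ph. rewrite RInt_point. unfold zero; simpl. lra.
Qed.

Lemma th_pi u v : a <= u -> u <= v -> v <= b -> th v - th u <= PI.
Proof.
  intros. pose proof (th_mono a u ltac:(lra) ltac:(lra) ltac:(lra)).
  pose proof (th_mono v b ltac:(lra) ltac:(lra) ltac:(lra)). pose proof th_ab. lra.
Qed.

Lemma th_sg u v : a <= u -> u <= v -> v <= b -> R1 * (th v - th u) <= sg v - sg u.
Proof.
  intros H1 H2 H3.
  pose proof (cmp_deriv (fun t => R1 * th t) sg (fun t => R1 * kk t) sp u v H2
    (fun x Hx => isd_scal R1 th _ x (th_deriv x ltac:(lra))) (fun x Hx => sg_deriv x ltac:(lra))
    (fun x Hx => kk_R1 x ltac:(lra))). lra.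
Qed.

Lemma sg_mono u v : a <= u -> u <= v -> v <= b -> 0 <= sg v - sg u.
Proof.
  intros H1 H2 H3.
  pose proof (cmp_deriv (fun _ => 0) sg (fun _ => 0) sp u v H2
    (fun x _ => isd_const 0 x) (fun x Hx => sg_deriv x ltac:(lra))
    (fun x Hx => Rlt_le _ _ (sp_pos x ltac:(lra)))). lra.
Qed.

Lemma dcross z w : a0 < z < b0 -> a0 < w < b0 ->
  dx z * dy w - dy z * dx w = sp z * sp w * sin (th w - th z).
Proof.
  intros Hz Hw. rewrite (dx_rep z), (dy_rep z), (dx_rep w), (dy_rep w) by auto.
  rewrite sin_minus. ring.
Qed.

Definition crs t1 t2 t3 :=
  (gx t2 - gx t1) * (gy t3 - gy t2) - (gy t2 - gy t1) * (gx t3 - gx t2).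

Lemma inner_bound t1 t2 w : a <= t1 -> t1 <= t2 -> t2 <= w -> w <= b ->
  let e := (gx t2 - gx t1) * dy w - (gy t2 - gy t1) * dx w in
  0 <= e /\ 2 * R1 * e <= sp w * ((sg w - sg t1) ^ 2 - (sg w - sg t2) ^ 2).
Proof.
  intros H1 H2 H3 H4 e.
  set (E := fun z => (- dy w) * gx z + dx w * gy z + (gx t2 * dy w - gy t2 * dx w)).
  assert (HE : forall z, is_derive E z (- dy w * dx z + dx w * dy z)).
  { intros z. apply isd_lin2; [apply gx_deriv|apply gy_deriv]. }
  assert (Ee : e = E t1) by (unfold e, E; ring).
  assert (E2 : E t2 = 0) by (unfold E; ring).
  assert (Hd : forall z, t1 <= z <= t2 -> - dy w * dx z + dx w * dy z = - (sp z * sp w * sin (th w - th z))).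
  { intros z Hz. rewrite <- dcross by lra. ring. }
  split.
  - pose proof (cmp_deriv E (fun _ => 0) _ (fun _ => 0) t1 t2 H2 (fun z _ => HE z)
      (fun z _ => isd_const 0 z)) as C.
    assert (0 <= e).
    { rewrite Ee. enough (E t2 - E t1 <= 0 - 0) by lra. apply C.
      intros z Hz. rewrite Hd by auto.
      pose proof (sp_pos z ltac:(lra)). pose proof (sp_pos w ltac:(lra)).
      assert (0 <= sin (th w - th z)).
      { apply sin_ge_0. apply th_mono; lra. apply th_pi; lra. }
      assert (0 <= sp z * sp w * sin (th w - th z)) by (apply Rmult_le_pos; [nra|auto]).
      lra. }
    auto.
  - set (G := fun z => sp w * ((sg w - sg z) ^ 2 - (sg w - sg t2) ^ 2) / (2 * R1)).
    assert (HG : forall z, t1 <= z <= t2 -> is_derive G z (sp w * (2 * (sg w - sg z) * (- sp z)) / (2 * R1))).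
    { intros z Hz. unfold G.
      apply (isd_ext (fun z => (sp w / (2 * R1)) * (sg w - sg z) ^ 2 + 0 * sg z + (- sp w * (sg w - sg t2) ^ 2 / (2 * R1)))).
      intros; field; lra.
      eapply isd_eq; [|apply isd_lin2; [apply isd_sq; apply isd_minus; [apply isd_const|apply sg_deriv; lra]|apply sg_deriv; lra]].
      cbv beta. field; lra. }
    pose proof (cmp_deriv G E _ _ t1 t2 H2 HG (fun z _ => HE z)) as C.
    assert (E t1 <= G t1).
    { enough (G t2 - G t1 <= E t2 - E t1).
      { assert (G t2 = 0) by (unfold G; field; lra). lra. }
      apply C. intros z Hz. rewrite Hd by auto.
      pose proof (sp_pos z ltac:(lra)). pose proof (sp_pos w ltac:(lra)).
      assert (S1 : sin (th w - th z) <= th w - th z) by (apply sin_le_x; apply th_mono; lra).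
      assert (S2 : R1 * (th w - th z) <= sg w - sg z) by (apply th_sg; lra).
      assert (S3 : R1 * sin (th w - th z) <= sg w - sg z) by nra.
      assert (sp z * sp w * (R1 * sin (th w - th z)) <= sp z * sp w * (sg w - sg z)).
      { apply Rmult_le_compat_l. nra. auto. }
      apply (Rmult_le_reg_l R1). auto.
      replace (R1 * (sp w * (2 * (sg w - sg z) * - sp z) / (2 * R1))) with (- (sp z * sp w * (sg w - sg z))) by (field; lra).
      lra. }
    rewrite Ee. unfold G in H.
    apply (Rmult_le_compat_l (2 * R1)) in H; [|lra].
    replace (2 * R1 * (sp w * ((sg w - sg t1) ^ 2 - (sg w - sg t2) ^ 2) / (2 * R1))) with
      (sp w * ((sg w - sg t1) ^ 2 - (sg w - sg t2) ^ 2)) in H by (field; lra).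
    exact H.
Qed.


Lemma cross_bounds t1 t2 t3 : a <= t1 -> t1 <= t2 -> t2 <= t3 -> t3 <= b ->
  0 <= crs t1 t2 t3 /\
  2 * R1 * crs t1 t2 t3 <= (sg t2 - sg t1) * (sg t3 - sg t2) * (sg t3 - sg t1).
Proof.
  intros H1 H2 H3 H4.
  set (C := fun w => (gx t2 - gx t1) * gy w + (- (gy t2 - gy t1)) * gx w
                     + (- (gx t2 - gx t1) * gy t2 + (gy t2 - gy t1) * gx t2)).
  assert (HC : forall w, is_derive C w ((gx t2 - gx t1) * dy w + (- (gy t2 - gy t1)) * dx w)).
  { intros w. apply isd_lin2; [apply gy_deriv|apply gx_deriv]. }
  assert (Cc : crs t1 t2 t3 = C t3 - C t2) by (unfold crs, C; ring).
  split.
  - rewrite Cc.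
    pose proof (cmp_deriv (fun _ => 0) C (fun _ => 0) _ t2 t3 H3 (fun w _ => isd_const 0 w)
      (fun w _ => HC w)) as K.
    enough (0 - 0 <= C t3 - C t2) by lra. apply K.
    intros w Hw. pose proof (inner_bound t1 t2 w ltac:(lra) ltac:(lra) ltac:(lra) ltac:(lra)) as K1. cbv zeta in K1. destruct K1 as [K1 _]. nra.
  - set (s1 := sg t1). set (s2 := sg t2).
    set (Hf := fun w => (s2 - s1) * (sg w - s1) * (sg w - s2) / (2 * R1)).
    assert (HH : forall w, t2 <= w <= t3 -> is_derive Hf w ((s2 - s1) / (2 * R1) * (sp w * (sg w - s2) + (sg w - s1) * sp w))).
    { intros w Hw. unfold Hf.
      apply (isd_ext (fun w => ((s2 - s1) / (2 * R1)) * ((sg w - s1) * (sg w - s2)) + 0 * sg w + 0)).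
      intros; field; lra.
      eapply isd_eq; [|apply isd_lin2; [apply isd_mult; apply isd_minus; [apply sg_deriv; lra|apply isd_const|apply sg_deriv; lra|apply isd_const]|apply sg_deriv; lra]].
      cbv beta. ring. }
    pose proof (cmp_deriv C Hf _ _ t2 t3 H3 (fun w _ => HC w) HH) as K.
    assert (C t3 - C t2 <= Hf t3 - Hf t2).
    { apply K. intros w Hw. pose proof (inner_bound t1 t2 w ltac:(lra) ltac:(lra) ltac:(lra) ltac:(lra)) as K2. cbv zeta in K2. destruct K2 as [_ K2].
      apply (Rmult_le_reg_l (2 * R1)). lra.
      replace (2 * R1 * ((s2 - s1) / (2 * R1) * (sp w * (sg w - s2) + (sg w - s1) * sp w)))
        with (sp w * ((sg w - sg t1) ^ 2 - (sg w - sg t2) ^ 2)) by (unfold s1, s2; field; lra).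
      lra. }
    rewrite Cc. unfold Hf in H. 
    apply (Rmult_le_compat_l (2 * R1)) in H; [|lra].
    replace (2 * R1 * ((s2 - s1) * (sg t3 - s1) * (sg t3 - s2) / (2 * R1) -
         (s2 - s1) * (sg t2 - s1) * (sg t2 - s2) / (2 * R1))) with
      ((sg t2 - sg t1) * (sg t3 - sg t2) * (sg t3 - sg t1)) in H by (unfold s1, s2; field; lra).
    unfold s1, s2 in *. lra.
Qed.


Lemma dn_rep n1 n2 s : a0 < s < b0 -> n1 * dx s + n2 * dy s = sp s * tf n1 n2 (th s).
Proof. intros Hs. rewrite dx_rep, dy_rep by auto. unfold tf. ring. Qed.

Lemma chord s t : a <= s -> s <= t -> t <= b ->
  (gx t - gx s) ^ 2 + (gy t - gy s) ^ 2 <= (sg t - sg s) ^ 2.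
Proof.
  intros H1 H2 H3. apply unit_bound. intros n1 n2 Hn.
  pose proof (cmp_deriv (fun u => n1 * gx u + n2 * gy u + 0) sg _ sp s t H2
     (fun u _ => isd_lin2 gx gy n1 n2 0 _ _ u (gx_deriv u) (gy_deriv u))
     (fun u Hu => sg_deriv u ltac:(lra))) as K.
  enough (n1 * gx t + n2 * gy t + 0 - (n1 * gx s + n2 * gy s + 0) <= sg t - sg s) by lra.
  apply K. intros u Hu. rewrite dn_rep by lra.
  pose proof (sp_pos u ltac:(lra)).
  assert (tf n1 n2 (th u) <= 1).
  { pose proof (tfF_sq n1 n2 Hn (th u)). pose proof (pow2_ge_0 (tF n1 n2 (th u))). nra. }
  nra.
Qed.

Lemma Psi_deriv n1 n2 (x0 x : R) :
  is_derive (fun y => RInt (fun u => pp (tf n1 n2 u)) x0 y) x (pp (tf n1 n2 x)).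
Proof.
  apply (is_derive_RInt (fun u => pp (tf n1 n2 u)) _ x0 x).
  - apply (loc_interval _ (x - 1) (x + 1) x ltac:(lra)). intros y Hy.
    apply (RInt_correct (fun u => pp (tf n1 n2 u)) x0 y).
    apply exR_cont. intros. apply cont_pp. apply tf_cont.
  - apply cont_pp. apply tf_cont.
Qed.

Lemma Psi_nonneg n1 n2 (x y : R) : x <= y -> 0 <= RInt (fun u => pp (tf n1 n2 u)) x y.
Proof.
  intros H. apply RInt_ge_0; auto.
  apply exR_cont. intros. apply cont_pp. apply tf_cont.
  intros; apply pp_ge0.
Qed.

Lemma Psi_chasles n1 n2 (x y z : R) :
  RInt (fun u => pp (tf n1 n2 u)) x y + RInt (fun u => pp (tf n1 n2 u)) y z =
  RInt (fun u => pp (tf n1 n2 u)) x z.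
Proof.
  pose proof (RInt_Chasles (fun u => pp (tf n1 n2 u)) x y z) as K.
  apply K; apply exR_cont; intros; apply cont_pp; apply tf_cont.
Qed.

Lemma blaschke_dir tm t n1 n2 : a <= tm <= b -> a <= t <= b -> n1 ^ 2 + n2 ^ 2 = 1 ->
  (gx t - (gx tm - R2 * sin (th tm))) * n1 + (gy t - (gy tm + R2 * cos (th tm))) * n2 <= R2.
Proof.
  intros Hm Ht Hn.
  set (c1 := gx tm - R2 * sin (th tm)). set (c2 := gy tm + R2 * cos (th tm)).
  set (h1 := fun s => n1 * gx s + n2 * gy s + (- (n1 * c1 + n2 * c2))).
  assert (Hh1 : forall s, is_derive h1 s (n1 * dx s + n2 * dy s)).
  { intros s. apply isd_lin2; [apply gx_deriv|apply gy_deriv]. }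
  assert (Hh1m : h1 tm = R2 * tF n1 n2 (th tm)) by (unfold h1, c1, c2, tF; ring).
  enough (h1 t <= R2) by (unfold h1 in H; lra).
  destruct (Rle_dec tm t) as [Hle|Hle].
  - set (Psi := fun y => RInt (fun u => pp (tf n1 n2 u)) (th tm) y).
    pose proof (cmp_deriv h1 (fun s => R2 * Psi (th s)) _ (fun s => R2 * (pp (tf n1 n2 (th s)) * kk s)) tm t Hle
      (fun s _ => Hh1 s)
      (fun s Hs => isd_scal R2 _ _ s (isd_comp Psi th _ _ s (Psi_deriv n1 n2 (th tm) (th s)) (th_deriv s ltac:(lra))))) as K.
    assert (h1 t - h1 tm <= R2 * Psi (th t) - R2 * Psi (th tm)).
    { apply K. intros s Hs. rewrite dn_rep by lra.
      pose proof (sp_pos s ltac:(lra)). pose proof (sp_R2 s ltac:(lra)).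
      pose proof (pp_ge (tf n1 n2 (th s))). pose proof (pp_ge0 (tf n1 n2 (th s))).
      assert (sp s * tf n1 n2 (th s) <= sp s * pp (tf n1 n2 (th s))) by (apply Rmult_le_compat_l; lra).
      assert (sp s * pp (tf n1 n2 (th s)) <= R2 * kk s * pp (tf n1 n2 (th s))) by (apply Rmult_le_compat_r; lra).
      lra. }
    assert (P0 : Psi (th tm) = 0) by (unfold Psi; rewrite RInt_point; reflexivity).
    assert (P1 : Psi (th t) <= Psi (th tm + PI)).
    { unfold Psi. rewrite <- (Psi_chasles n1 n2 (th tm) (th t) (th tm + PI)).
      assert (Q1 : th t <= th tm + PI) by (pose proof (th_pi tm t ltac:(lra) Hle ltac:(lra)); lra).
      pose proof (Psi_nonneg n1 n2 (th t) (th tm + PI) Q1). lra. }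
    pose proof (trig_pos_int n1 n2 Hn (th tm)) as T. fold (Psi (th tm + PI)) in T.
    assert (0 <= R2) by (pose proof (sp_R2 a ltac:(lra)); pose proof (kk_pos a ltac:(lra)); pose proof (sp_pos a ltac:(lra)); nra).
    assert (R2 * Psi (th t) <= R2 * (1 - tF n1 n2 (th tm))).
    { apply Rmult_le_compat_l; lra. }
    rewrite P0 in H. lra.
  - assert (Hle' : t <= tm) by lra.
    set (m1 := - n1). set (m2 := - n2).
    assert (Hm' : m1 ^ 2 + m2 ^ 2 = 1) by (unfold m1, m2; lra).
    set (Psi := fun y => RInt (fun u => pp (tf m1 m2 u)) (th tm - PI) y).
    pose proof (cmp_deriv (fun s => 0 - h1 s) (fun s => R2 * Psi (th s)) _ (fun s => R2 * (pp (tf m1 m2 (th s)) * kk s)) t tm Hle'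
      (fun s _ => isd_minus _ _ _ _ s (isd_const 0 s) (Hh1 s))
      (fun s Hs => isd_scal R2 _ _ s (isd_comp Psi th _ _ s (Psi_deriv m1 m2 (th tm - PI) (th s)) (th_deriv s ltac:(lra))))) as K.
    assert ((0 - h1 tm) - (0 - h1 t) <= R2 * Psi (th tm) - R2 * Psi (th t)).
    { apply K. intros s Hs.
      assert (E : 0 - (n1 * dx s + n2 * dy s) = sp s * tf m1 m2 (th s)).
      { rewrite dn_rep by lra. unfold tf, m1, m2. ring. }
      rewrite E.
      pose proof (sp_pos s ltac:(lra)). pose proof (sp_R2 s ltac:(lra)).
      pose proof (pp_ge (tf m1 m2 (th s))). pose proof (pp_ge0 (tf m1 m2 (th s))).
      assert (sp s * tf m1 m2 (th s) <= sp s * pp (tf m1 m2 (th s))) by (apply Rmult_le_compat_l; lra).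
      assert (sp s * pp (tf m1 m2 (th s)) <= R2 * kk s * pp (tf m1 m2 (th s))) by (apply Rmult_le_compat_r; lra).
      lra. }
    assert (P0 : 0 <= Psi (th t)).
    { unfold Psi. apply Psi_nonneg.
      pose proof (th_pi t tm ltac:(lra) Hle' ltac:(lra)). lra. }
    pose proof (trig_pos_int m1 m2 Hm' (th tm - PI)) as T.
    replace (th tm - PI + PI) with (th tm) in T by ring. fold (Psi (th tm)) in T.
    assert (TF : tF m1 m2 (th tm - PI) = tF n1 n2 (th tm)).
    { unfold tF, m1, m2.
      pose proof (neg_sin (th tm - PI)). pose proof (neg_cos (th tm - PI)).
      replace (th tm - PI + PI) with (th tm) in * by ring. nra. }
    rewrite TF in T.
    assert (0 <= R2) by (pose proof (sp_R2 a ltac:(lra)); pose proof (kk_pos a ltac:(lra)); pose proof (sp_pos a ltac:(lra)); nra).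
    assert (R2 * Psi (th tm) <= R2 * (1 - tF n1 n2 (th tm))).
    { apply Rmult_le_compat_l; lra. }
    assert (0 <= R2 * Psi (th t)) by (apply Rmult_le_pos; lra).
    lra.
Qed.

Lemma blaschke tm t : a <= tm <= b -> a <= t <= b ->
  (gx t - (gx tm - R2 * sin (th tm))) ^ 2 + (gy t - (gy tm + R2 * cos (th tm))) ^ 2 <= R2 ^ 2.
Proof.
  intros Hm Ht. apply unit_bound. intros n1 n2 Hn. apply blaschke_dir; auto.
Qed.

Lemma center_dist tm : a <= tm <= b ->
  (gx tm - (gx tm - R2 * sin (th tm))) ^ 2 + (gy tm - (gy tm + R2 * cos (th tm))) ^ 2 = R2 ^ 2.
Proof.
  intros. pose proof (sin2_cos2 (th tm)). unfold Rsqr in H0.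
  transitivity (R2 ^ 2 * (sin (th tm) * sin (th tm) + cos (th tm) * cos (th tm))). ring.
  rewrite H0. ring.
Qed.


Lemma sg_strict u v : a <= u -> u < v -> v <= b -> sg u < sg v.
Proof.
  intros H1 H2 H3.
  destruct (MVT_gen sg u v sp) as [c [Hc E]].
  - intros x Hx. rewrite Rmin_left in Hx by lra. rewrite Rmax_right in Hx by lra. apply sg_deriv; lra.
  - intros x Hx. rewrite Rmin_left in Hx by lra. rewrite Rmax_right in Hx by lra.
    apply continuity_pt_filterlim. exact (cont_of_deriv _ _ _ (sg_deriv x ltac:(lra))).
  - rewrite Rmin_left in Hc by lra. rewrite Rmax_right in Hc by lra.
    pose proof (sp_pos c ltac:(lra)). nra.
Qed.

Lemma sg_a : sg a = 0.
Proof. unfold sg. rewrite RInt_point. reflexivity. Qed.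

Lemma R2_pos : 0 < R2.
Proof.
  pose proof (sp_R2 a ltac:(lra)). pose proof (kk_pos a ltac:(lra)). pose proof (sp_pos a ltac:(lra)).
  destruct (Rle_dec R2 0); [|lra]. nra.
Qed.

Lemma ed_unfold (p q : R * R) : edist2 p q = sqrt ((fst p - fst q) ^ 2 + (snd p - snd q) ^ 2).
Proof. reflexivity. Qed.

Lemma col_case tm te tf (M E F : R * R) al be u1 u2 dl d :
  a <= tm <= b -> a <= te <= b -> a <= tf <= b ->
  edist2 (gx tm, gy tm) M < dl -> edist2 (gx te, gy te) E < dl -> edist2 (gx tf, gy tf) F < dl ->
  fst E - fst M = al * u1 -> snd E - snd M = al * u2 ->
  fst F - fst M = - be * u1 -> snd F - snd M = - be * u2 -> 0 < al -> 0 < be ->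
  d <= edist2 E M -> d <= edist2 F M -> 4 * R2 * dl + 2 * d * dl < d ^ 2 -> 0 <= d -> 0 < dl -> False.
Proof.
  intros Hm He Hf DM DE DF E1 E2 F1 F2 Hal Hbe HdE HdF Hd Hd0 Hdl.
  pose proof R2_pos as HR2.
  set (c1 := gx tm - R2 * sin (th tm)). set (c2 := gy tm + R2 * cos (th tm)).
  rewrite ed_unfold in *. cbn [fst snd] in DM, DE, DF.
  apply (collinear_contra (fst M) (snd M) (fst E) (snd E) (fst F) (snd F) c1 c2 u1 u2 al be R2 d dl); auto; try lra.
  - pose proof (center_dist tm Hm) as C. fold c1 c2 in C.
    assert (S : sqrt ((gx tm - c1) ^ 2 + (gy tm - c2) ^ 2) = R2) by (rewrite C; apply sqrt_pow2; lra).
    pose proof (tri3 (gx tm) (gy tm) (fst M) (snd M) c1 c2). lra.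
  - pose proof (blaschke tm te Hm He) as C. fold c1 c2 in C.
    pose proof (sqrt_le_of_sq _ R2 ltac:(lra) C).
    pose proof (tri3 (fst E) (snd E) (gx te) (gy te) c1 c2).
    rewrite nrm_sym in DE. lra.
  - pose proof (blaschke tm tf Hm Hf) as C. fold c1 c2 in C.
    pose proof (sqrt_le_of_sq _ R2 ltac:(lra) C).
    pose proof (tri3 (fst F) (snd F) (gx tf) (gy tf) c1 c2).
    rewrite nrm_sym in DF. lra.
Qed.


Lemma pair_neq (P Q : R * R) : P <> Q -> 0 < (fst P - fst Q) ^ 2 + (snd P - snd Q) ^ 2.
Proof.
  intros H. destruct P as [p1 p2], Q as [q1 q2]. simpl.
  pose proof (pow2_ge_0 (p1 - q1)). pose proof (pow2_ge_0 (p2 - q2)).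
  destruct (Req_dec ((p1 - q1) ^ 2 + (p2 - q2) ^ 2) 0) as [E|E]; [|lra].
  assert (A1 : (p1 - q1)² = 0) by (rewrite Rsqr_pow2; lra).
  assert (A2 : (p2 - q2)² = 0) by (rewrite Rsqr_pow2; lra).
  apply Rsqr_0_uniq in A1. apply Rsqr_0_uniq in A2.
  exfalso. apply H. f_equal; lra.
Qed.

Lemma ed_sq t (Q : R * R) dl : edist2 (gx t, gy t) Q < dl ->
  (fst Q - gx t) ^ 2 + (snd Q - gy t) ^ 2 <= dl ^ 2.
Proof.
  intros H. rewrite ed_unfold in H. cbn [fst snd] in H.
  apply sq_lt_of_sqrt_lt in H. 
  replace ((fst Q - gx t) ^ 2 + (snd Q - gy t) ^ 2) with ((gx t - fst Q) ^ 2 + (gy t - snd Q) ^ 2) by ring. lra.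
  pose proof (pow2_ge_0 (gx t - fst Q)). pose proof (pow2_ge_0 (gy t - snd Q)). lra.
Qed.

Lemma chord_sqrt s t : a <= s -> s <= t -> t <= b ->
  sqrt ((gx t - gx s) ^ 2 + (gy t - gy s) ^ 2) <= sg t - sg s.
Proof.
  intros. apply sqrt_le_of_sq. apply sg_mono; auto. apply chord; auto.
Qed.

Lemma core (v0 v1 v2 : R * R) (dl d : R) t1 t2 t3 (Q1 Q2 Q3 : R * R) :
  a <= t1 -> t1 < t2 -> t2 < t3 -> t3 <= b ->
  in_lattice v0 v1 v2 Q1 -> in_lattice v0 v1 v2 Q2 -> in_lattice v0 v1 v2 Q3 ->
  Q1 <> Q2 -> Q2 <> Q3 -> Q1 <> Q3 ->
  edist2 (gx t1, gy t1) Q1 < dl -> edist2 (gx t2, gy t2) Q2 < dl -> edist2 (gx t3, gy t3) Q3 < dl ->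
  (forall P Q, in_lattice v0 v1 v2 P -> in_lattice v0 v1 v2 Q -> P <> Q -> d <= edist2 P Q) ->
  0 <= d -> 0 < dl -> 4 * R2 * dl + 2 * d * dl < d ^ 2 ->
  0 < lattice_area v1 v2 - 2 * (sg b - sg a) * dl - 3 * dl ^ 2 ->
  8 * (R1 * (lattice_area v1 v2 - 2 * (sg b - sg a) * dl - 3 * dl ^ 2)) <= (sg t3 - sg t1) ^ 3.
Proof.
  intros H1 H12 H23 H3 L1 L2 L3 N12 N23 N13 D1 D2 D3 Hd Hd0 Hdl Hdd HY.
  set (Y := lattice_area v1 v2 - 2 * (sg b - sg a) * dl - 3 * dl ^ 2) in *.
  assert (L1' := L1). assert (L2' := L2). assert (L3' := L3).
  destruct L1 as [m1 [n1 E1]]. destruct L2 as [m2 [n2 E2]]. destruct L3 as [m3 [n3 E3]].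
  pose proof (lattice_cross v0 v1 v2 m1 n1 m2 n2 m3 n3) as LC. cbv zeta in LC.
  rewrite <- E1, <- E2, <- E3 in LC.
  set (z := ((m2 - m1) * (n3 - n2) - (n2 - n1) * (m3 - m2))%Z) in *.
  set (crsQ := crs2 (fst Q1) (snd Q1) (fst Q2) (snd Q2) (fst Q3) (snd Q3)) in *.
  destruct (Z.eq_dec z 0) as [Z0|Z0].
  - exfalso.
    assert (CQ : crsQ = 0) by (rewrite LC, Z0; simpl; ring).
    set (u1 := fst Q2 - fst Q1). set (u2 := snd Q2 - snd Q1).
    set (w1 := fst Q3 - fst Q2). set (w2 := snd Q3 - snd Q2).
    assert (Cr : u1 * w2 - u2 * w1 = 0) by (unfold crsQ, crs2 in CQ; unfold u1, u2, w1, w2; lra).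
    assert (Hu : 0 < u1 ^ 2 + u2 ^ 2).
    { pose proof (pair_neq Q2 Q1 (fun E => N12 (eq_sym E))). unfold u1, u2. lra. }
    assert (Hw : 0 < w1 ^ 2 + w2 ^ 2) by (pose proof (pair_neq Q3 Q2 (fun E => N23 (eq_sym E))); unfold w1, w2; lra).
    set (lam := (w1 * u1 + w2 * u2) / (u1 ^ 2 + u2 ^ 2)).
    assert (W1 : w1 = lam * u1).
    { assert (E : (w1 * u1 + w2 * u2) * u1 = w1 * (u1 ^ 2 + u2 ^ 2)).
      { replace ((w1 * u1 + w2 * u2) * u1) with (w1 * u1 ^ 2 + u2 * (w2 * u1)) by ring.
        replace (w2 * u1) with (w1 * u2) by lra. ring. }
      unfold lam. apply (Rmult_eq_reg_r (u1 ^ 2 + u2 ^ 2)); [|lra]. unfold Rdiv.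
      replace ((w1 * u1 + w2 * u2) * / (u1 ^ 2 + u2 ^ 2) * u1 * (u1 ^ 2 + u2 ^ 2)) with ((w1 * u1 + w2 * u2) * u1) by (field; lra).
      lra. }
    assert (W2 : w2 = lam * u2).
    { assert (E : (w1 * u1 + w2 * u2) * u2 = w2 * (u1 ^ 2 + u2 ^ 2)).
      { replace ((w1 * u1 + w2 * u2) * u2) with (w2 * u2 ^ 2 + u1 * (w1 * u2)) by ring.
        replace (w1 * u2) with (w2 * u1) by lra. ring. }
      unfold lam. apply (Rmult_eq_reg_r (u1 ^ 2 + u2 ^ 2)); [|lra]. unfold Rdiv.
      replace ((w1 * u1 + w2 * u2) * / (u1 ^ 2 + u2 ^ 2) * u2 * (u1 ^ 2 + u2 ^ 2)) with ((w1 * u1 + w2 * u2) * u2) by (field; lra).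
      lra. }
    assert (Hlam : lam <> 0) by (intros E; rewrite E in W1, W2; rewrite W1, W2 in Hw; lra).
    assert (Hd13 : forall P Q, in_lattice v0 v1 v2 P -> in_lattice v0 v1 v2 Q -> P <> Q -> d <= edist2 P Q) by exact Hd.
    destruct (Rlt_le_dec 0 lam) as [Lp|Ln].
    +
      apply (col_case t2 t3 t1 Q2 Q3 Q1 lam 1 u1 u2 dl d); try lra; auto.
      all: try (unfold u1, u2, w1, w2 in *; lra).
    + destruct (Rlt_le_dec 0 (1 + lam)) as [Lp1|Ln1].
      *
        apply (col_case t3 t2 t1 Q3 Q2 Q1 (- lam) (1 + lam) u1 u2 dl d); try lra; auto.
        all: try (unfold u1, u2, w1, w2 in *; lra).
      * destruct (Req_dec (1 + lam) 0) as [Z1|Z1].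
        -- apply N13. destruct Q1 as [q11 q12], Q3 as [q31 q32].
           unfold u1, u2, w1, w2 in *; simpl in *. f_equal; nra.
        --
           apply (col_case t1 t2 t3 Q1 Q2 Q3 1 (- (1 + lam)) u1 u2 dl d); try lra; auto.
           all: try (unfold u1, u2, w1, w2 in *; lra).
  - assert (HA : lattice_area v1 v2 <= Rabs crsQ).
    { rewrite LC, Rabs_mult. unfold lattice_area.
      pose proof (IZR_abs_ge1 z Z0). pose proof (Rabs_pos (det2 v1 v2)). nra. }
    pose proof (ed_sq t1 Q1 dl D1) as S1. pose proof (ed_sq t2 Q2 dl D2) as S2. pose proof (ed_sq t3 Q3 dl D3) as S3.
    pose proof (perturb (gx t1) (gy t1) (gx t2) (gy t2) (gx t3) (gy t3)
      (fst Q1 - gx t1) (snd Q1 - gy t1) (fst Q2 - gx t2) (snd Q2 - gy t2) (fst Q3 - gx t3) (snd Q3 - gy t3) dl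
      S1 S2 S3 ltac:(lra)) as PT.
    replace (gx t1 + (fst Q1 - gx t1)) with (fst Q1) in PT by ring.
    replace (gy t1 + (snd Q1 - gy t1)) with (snd Q1) in PT by ring.
    replace (gx t2 + (fst Q2 - gx t2)) with (fst Q2) in PT by ring.
    replace (gy t2 + (snd Q2 - gy t2)) with (snd Q2) in PT by ring.
    replace (gx t3 + (fst Q3 - gx t3)) with (fst Q3) in PT by ring.
    replace (gy t3 + (snd Q3 - gy t3)) with (snd Q3) in PT by ring.
    fold crsQ in PT.
    pose proof (chord_sqrt t2 t3 ltac:(lra) ltac:(lra) ltac:(lra)) as C23.
    pose proof (chord_sqrt t1 t3 ltac:(lra) ltac:(lra) ltac:(lra)) as C13.
    pose proof (chord_sqrt t1 t2 ltac:(lra) ltac:(lra) ltac:(lra)) as C12.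
    rewrite (nrm_sym (gx t2)) in PT. rewrite (nrm_sym (gx t1) (gy t1) (gx t2)) in PT.
    pose proof (sg_mono a t1 ltac:(lra) ltac:(lra) ltac:(lra)).
    pose proof (sg_mono t3 b ltac:(lra) ltac:(lra) ltac:(lra)).
    pose proof (sg_mono t1 t2 ltac:(lra) ltac:(lra) ltac:(lra)).
    pose proof (sg_mono t2 t3 ltac:(lra) ltac:(lra) ltac:(lra)).
    assert (Per : dl * (sqrt ((gx t3 - gx t2) ^ 2 + (gy t3 - gy t2) ^ 2) + sqrt ((gx t3 - gx t1) ^ 2 + (gy t3 - gy t1) ^ 2) +
                  sqrt ((gx t2 - gx t1) ^ 2 + (gy t2 - gy t1) ^ 2)) <= dl * (2 * (sg b - sg a))).
    { apply Rmult_le_compat_l; lra. }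
    set (crsP := crs2 (gx t1) (gy t1) (gx t2) (gy t2) (gx t3) (gy t3)) in *.
    destruct (cross_bounds t1 t2 t3 ltac:(lra) ltac:(lra) ltac:(lra) ltac:(lra)) as [CB1 CB2].
    assert (EP : crs t1 t2 t3 = crsP) by reflexivity. rewrite EP in CB1, CB2.
    assert (Hc : Y <= crsP).
    { pose proof (Rabs_triang_inv crsQ crsP). rewrite (Rabs_right crsP) in H5 by lra. unfold Y. lra. }
    set (s := sg t2 - sg t1) in *. set (t := sg t3 - sg t2) in *.
    replace (sg t3 - sg t1) with (s + t) in * by (unfold s, t; ring).
    assert (2 * R1 * Y <= s * t * (s + t)).
    { assert (2 * R1 * Y <= 2 * R1 * crsP) by (apply Rmult_le_compat_l; lra). lra. }
    assert (s * t * (s + t) * 4 <= (s + t) ^ 3).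
    { pose proof (pow2_ge_0 (s - t)). assert (0 <= s + t) by lra. nra. }
    lra.
Qed.

End Curve.

Lemma glb_facts (E : R -> Prop) : (forall x, E x -> 0 <= x) ->
  0 <= real (Glb_Rbar E) /\ (forall x, E x -> real (Glb_Rbar E) <= x).
Proof.
  intros Hpos. destruct (Glb_Rbar_correct E) as [Hlb Hgr].
  assert (H0 : Rbar_le 0 (Glb_Rbar E)) by (apply Hgr; intros x Hx; simpl; auto).
  unfold is_lb_Rbar in Hlb. clear Hgr.
  destruct (Glb_Rbar E) as [r| |]; simpl in *.
  - split. lra. intros x Hx. specialize (Hlb x Hx). simpl in Hlb. auto.
  - split. lra. intros x Hx. specialize (Hlb x Hx). simpl in Hlb. contradiction.
  - contradiction.
Qed.

Lemma glb_lt_ex (E : R -> Prop) (dl : R) : (forall x, E x -> 0 <= x) -> (exists x, E x) ->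
  real (Glb_Rbar E) < dl -> exists x, E x /\ x < dl.
Proof.
  intros Hpos [x0 Hx0] Hlt. apply NNPP. intros Hn.
  destruct (Glb_Rbar_correct E) as [Hlb Hgr].
  assert (H1 : Rbar_le dl (Glb_Rbar E)).
  { apply Hgr. intros x Hx. simpl. destruct (Rle_dec dl x); auto. exfalso; apply Hn; exists x; split; auto; lra. }
  assert (H0 : Rbar_le 0 (Glb_Rbar E)) by (apply Hgr; intros x Hx; simpl; auto).
  unfold is_lb_Rbar in Hlb. specialize (Hlb x0 Hx0). clear Hgr.
  destruct (Glb_Rbar E) as [r| |]; simpl in *; try contradiction. lra.
Qed.

Lemma choose_list {A B : Type} (P : A -> B -> Prop) (l : list A) :
  (forall x, In x l -> exists y, P x y) ->
  exists m : list (A * B), map fst m = l /\ forall p, In p m -> P (fst p) (snd p).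
Proof.
  induction l as [|x l IH]; intros H.
  - exists nil. split; auto. intros p [].
  - destruct (H x (or_introl eq_refl)) as [y Hy].
    destruct IH as [m [Hm1 Hm2]]. intros z Hz. apply H. right; auto.
    exists ((x, y) :: m). split. simpl. rewrite Hm1. auto.
    intros p [Hp|Hp]. subst; simpl; auto. auto.
Qed.

Lemma fst_inj {A B : Type} (m : list (A * B)) p q :
  NoDup (map fst m) -> In p m -> In q m -> fst p = fst q -> p = q.
Proof.
  induction m as [|r m IH]; intros Hn Hp Hq E. destruct Hp.
  simpl in Hn. inversion Hn; subst.
  destruct Hp as [Hp|Hp]; destruct Hq as [Hq|Hq]; subst; auto.
  - exfalso. apply H1. rewrite E. apply in_map. auto.
  - exfalso. apply H1. rewrite <- E. apply in_map. auto.
Qed.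

Lemma nodup_snd {A B : Type} (m : list (A * B)) :
  NoDup (map fst m) -> (forall p q, In p m -> In q m -> snd p = snd q -> fst p = fst q) ->
  NoDup (map snd m).
Proof.
  induction m as [|r m IH]; intros Hn H. constructor.
  simpl in *. inversion Hn; subst. constructor.
  - intros Hi. apply in_map_iff in Hi. destruct Hi as [q [Eq Hq]].
    apply H2. rewrite (H r q); auto. apply in_map; auto.
  - apply IH; auto.
Qed.

Lemma ext_interval (a b : R) (gx gy dx dy ddx ddy : R -> R) :
  is_C2_curve gx gy dx dy ddx ddy -> a < b ->
  (forall t, a <= t <= b -> (dx t, dy t) <> (0, 0)) ->
  exists a0 b0, a0 < a /\ b < b0 /\ forall t, a0 < t < b0 -> 0 < dx t ^ 2 + dy t ^ 2.
Proof.
  intros HC2 Hab Hnz.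
  assert (Pos : forall t, a <= t <= b -> 0 < dx t ^ 2 + dy t ^ 2).
  { intros t Ht. pose proof (pair_neq (dx t, dy t) (0, 0) (Hnz t Ht)). simpl in H.
    replace (dx t - 0) with (dx t) in H by ring. replace (dy t - 0) with (dy t) in H by ring. auto. }
  assert (Loc : forall t0, a <= t0 <= b -> exists eps : posreal, forall t, Rabs (t - t0) < eps -> 0 < dx t ^ 2 + dy t ^ 2).
  { intros t0 Ht0.
    pose proof (cont_qq gx gy dx dy ddx ddy HC2 t0) as C.
    assert (L0 : locally (qq dx dy t0) (fun y => 0 < y)).
    { apply (loc_interval _ 0 (qq dx dy t0 + 1)). unfold qq. specialize (Pos t0 Ht0). lra. intros; lra. }
    specialize (C _ L0). destruct C as [eps Heps]. exists eps. intros t Ht.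
    apply (Heps t). unfold ball; simpl; unfold AbsRing_ball, abs, minus, plus, opp; simpl. auto. }
  destruct (Loc a ltac:(lra)) as [e1 He1]. destruct (Loc b ltac:(lra)) as [e2 He2].
  exists (a - e1 / 2), (b + e2 / 2).
  pose proof (cond_pos e1). pose proof (cond_pos e2).
  split. lra. split. lra.
  intros t Ht. destruct (Rle_dec a t); destruct (Rle_dec t b).
  - apply Pos; lra.
  - apply He2. rewrite Rabs_right; lra.
  - apply He1. rewrite Rabs_left; lra.
  - lra.
Qed.

Lemma rpower_cube (x : R) : 0 < x -> Rpower x (1 / 3) ^ 3 = x /\ 0 < Rpower x (1 / 3).
Proof.
  intros Hx. split.
  - assert (P : 0 < Rpower x (1 / 3)) by (unfold Rpower; apply exp_pos).
    rewrite <- (Rpower_pow 3 _ P). rewrite Rpower_mult.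
    replace (1 / 3 * INR 3) with 1 by (simpl; field). apply Rpower_1; auto.
  - unfold Rpower; apply exp_pos.
Qed.

Lemma cube_le (x y : R) : 0 < x -> 0 <= y -> x ^ 3 <= y ^ 3 -> x <= y.
Proof.
  intros Hx Hy H. destruct (Rle_dec x y); auto.
  assert (y < x) by lra. assert (y ^ 3 < x ^ 3).
  { simpl. rewrite !Rmult_1_r. assert (y * y <= x * x) by nra.
    assert (y * (y * y) <= y * (x * x)) by (apply Rmult_le_compat_l; lra).
    assert (y * (x * x) < x * (x * x)) by (apply Rmult_lt_compat_r; nra). lra. }
  lra.
Qed.

Theorem theorem7p7
  (a b : R) (gx gy dx dy ddx ddy : R -> R) (R1 R2 : R)
  (v0 v1 v2 : R * R) (delta : R) :
  convex_arc a b gx gy dx dy ddx ddy ->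
  total_curvature a b dx dy ddx ddy <= PI ->
  0 < R1 -> R1 <= R2 ->
  (forall t, a <= t <= b ->
     R1 <= / curvature dx dy ddx ddy t <= R2) ->
  lin_indep2 v1 v2 ->
  let L := arc_length a b dx dy in
  let A := lattice_area v1 v2 in
  let d := lattice_mindist v0 v1 v2 in
  0 < delta ->
  delta < d ^ 2 / (2 * (R2 + d + sqrt ((R2 + d) ^ 2 - d ^ 2))) ->
  A / 2 - L * delta - 3 / 2 * delta ^ 2 > 0 ->
  forall pts : list (R * R),
    NoDup pts ->
    (forall Q, In Q pts ->
       in_lattice v0 v1 v2 Q /\ dist_curve a b gx gy Q < delta) ->
    INR (length pts) <
      2 + L / Rpower (R1 * (A - 2 * L * delta - 3 * delta ^ 2)) (1 / 3).
Proof.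
  intros Hconv Htc HR1 HR12 Hrho Hlin L A d Hdl Hdb HA pts Hnd Hpts.
  destruct Hconv as [Hab [HC2 [Hd1 [Hd2 [Hcv [Hinj HK]]]]]].
  destruct (ext_interval a b gx gy dx dy ddx ddy HC2 Hab Hd1) as [a0 [b0 [Ha0 [Hb0 Hnz]]]].
  assert (Htot : RInt (kk dx dy ddx ddy) a b <= PI).
  { unfold total_curvature in Htc. rewrite (RInt_ext _ (fun t => curvature dx dy ddx ddy t * speed dx dy t)); auto.
    intros x Hx. rewrite Rmin_left in Hx by lra. rewrite Rmax_right in Hx by lra.
    rewrite (kk_curv a0 b0 dx dy ddx ddy Hnz x) by lra. reflexivity. }
  assert (HL : L = sg a dx dy b - sg a dx dy a).
  { rewrite sg_a. unfold L, arc_length, sg, sp. symmetry. apply Rminus_0_r. }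
  set (Ed := fun r => exists P Q, in_lattice v0 v1 v2 P /\ in_lattice v0 v1 v2 Q /\ P <> Q /\ r = edist2 P Q).
  assert (Edpos : forall x, Ed x -> 0 <= x).
  { intros x [P [Q [_ [_ [_ ->]]]]]. unfold edist2, enorm2. apply sqrt_pos. }
  destruct (glb_facts Ed Edpos) as [Hd0 Hdle].
  assert (Hd0' : 0 <= d) by exact Hd0. clear Hd0. rename Hd0' into Hd0.
  assert (Hdle' : forall x, Ed x -> d <= x) by exact Hdle. clear Hdle. rename Hdle' into Hdle.
  assert (Hdist : forall P Q, in_lattice v0 v1 v2 P -> in_lattice v0 v1 v2 Q -> P <> Q -> d <= edist2 P Q).
  { intros P Q HP HQ HPQ. apply Hdle. exists P, Q. auto. }
  assert (HR2 : 0 < R2) by lra.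
  assert (Hdd : 4 * R2 * delta + 2 * d * delta < d ^ 2).
  { set (S := sqrt ((R2 + d) ^ 2 - d ^ 2)) in *.
    assert (HS : R2 <= S).
    { unfold S. apply (Rle_trans _ (sqrt (R2 ^ 2))). rewrite sqrt_pow2 by lra; lra.
      apply sqrt_le_1_alt. pose proof (Rmult_le_pos R2 d ltac:(lra) Hd0). nra. }
    assert (HD : 0 < 2 * (R2 + d + S)) by lra.
    apply (Rmult_lt_compat_r (2 * (R2 + d + S))) in Hdb; auto.
    unfold Rdiv in Hdb. rewrite Rmult_assoc, Rinv_l in Hdb by lra. nra. }
  assert (Hd2d : 2 * delta < d) by nra.
  set (Y := A - 2 * L * delta - 3 * delta ^ 2).
  assert (HY : 0 < Y) by (unfold Y; lra).
  destruct (rpower_cube (R1 * Y) ltac:(nra)) as [HX3 HX].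
  set (X := Rpower (R1 * Y) (1 / 3)) in *.
  destruct (choose_list (fun Q t => a <= t <= b /\ in_lattice v0 v1 v2 Q /\ edist2 (gx t, gy t) Q < delta) pts)
    as [m [Hm1 Hm2]].
  { intros Q HQ. destruct (Hpts Q HQ) as [HQl HQd].
    set (Ec := fun r => exists t, a <= t <= b /\ r = edist2 (gx t, gy t) Q).
    assert (Ecpos : forall x, Ec x -> 0 <= x).
    { intros x [t [_ ->]]. unfold edist2, enorm2. apply sqrt_pos. }
    destruct (glb_lt_ex Ec delta Ecpos) as [r [[t [Ht ->]] Hr]].
    { exists (edist2 (gx a, gy a) Q). exists a. split; auto; lra. }
    { exact HQd. }
    exists t. auto. }
  assert (Hsame : forall p q, In p m -> In q m -> snd p = snd q -> fst p = fst q).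
  { intros p q Hp Hq E. apply NNPP. intros Hne.
    destruct (Hm2 p Hp) as [Hpt [Hpl Hpd]]. destruct (Hm2 q Hq) as [Hqt [Hql Hqd]].
    rewrite E in Hpd.
    pose proof (Hdist _ _ Hpl Hql Hne) as Hdd'.
    rewrite !ed_unfold in *. cbn [fst snd] in Hpd, Hqd.
    pose proof (tri3 (fst (fst p)) (snd (fst p)) (gx (snd q)) (gy (snd q)) (fst (fst q)) (snd (fst q))).
    rewrite (nrm_sym (fst (fst p)) (snd (fst p)) (gx (snd q)) (gy (snd q))) in H. lra. }
  rewrite <- Hm1 in Hnd |- *. rewrite length_map.
  assert (Hnds : NoDup (map snd m)) by (apply nodup_snd; auto).
  rewrite <- (length_map snd m).
  replace (L / X) with ((sg a dx dy b - sg a dx dy a) / X) by (rewrite HL; reflexivity).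
  apply count_main; auto; try lra.
  - intros x y Hx Hxy Hy. apply (sg_strict a b a0 b0 gx gy dx dy ddx ddy); auto.
  - intros x Hx. apply in_map_iff in Hx. destruct Hx as [p [<- Hp]]. apply Hm2; auto.
  - intros x y z Hx Hy Hz Hxy Hyz.
    apply in_map_iff in Hx. destruct Hx as [px [Ex Hpx]].
    apply in_map_iff in Hy. destruct Hy as [py [Ey Hpy]].
    apply in_map_iff in Hz. destruct Hz as [pz [Ez Hpz]].
    destruct (Hm2 px Hpx) as [Hxt [Hxl Hxd]].
    destruct (Hm2 py Hpy) as [Hyt [Hyl Hyd]].
    destruct (Hm2 pz Hpz) as [Hzt [Hzl Hzd]].
    assert (Nxy : fst px <> fst py).
    { intros E. pose proof (fst_inj m px py Hnd Hpx Hpy E). subst. lra. }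
    assert (Nyz : fst py <> fst pz).
    { intros E. pose proof (fst_inj m py pz Hnd Hpy Hpz E). subst. lra. }
    assert (Nxz : fst px <> fst pz).
    { intros E. pose proof (fst_inj m px pz Hnd Hpx Hpz E). subst. lra. }
    subst x y z.
    pose proof (core a b a0 b0 gx gy dx dy ddx ddy Ha0 Hab Hb0 HC2 Hnz R1 R2 HR1 Hcv Hrho Htot
      v0 v1 v2 delta d (snd px) (snd py) (snd pz) (fst px) (fst py) (fst pz)
      ltac:(lra) Hxy Hyz ltac:(lra) Hxl Hyl Hzl Nxy Nyz Nxz Hxd Hyd Hzd Hdist Hd0 Hdl Hdd) as K.
    rewrite <- HL in K. fold A in K. fold Y in K. specialize (K HY).
    pose proof (sg_mono a b a0 b0 gx gy dx dy ddx ddy Ha0 Hab Hb0 HC2 Hnz (snd px) (snd pz) ltac:(lra) ltac:(lra) ltac:(lra)).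
    apply cube_le. lra. auto.
    replace ((2 * X) ^ 3) with (8 * X ^ 3) by ring. rewrite HX3. auto.
Qed.
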